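(* Let $h$ be a harmonic function on $\mathbf D$ and $B>0$ a constant such that $|h(z)|\le B|z|$ for all $z\in\mathbf D$ and $\max_{1/6<r<1/3}h(re^{i\theta})\ge1$ for every $\theta\in[0,2\pi)$. If the integer $A$ is large enough, then the series $u(z)=\sum_{k=0}^\infty A^kh\big(z^{2^{A^k}}\big)$ converges in $\mathbf D$ to a function of class $\mathcal K$, and for some $d>0$, $$\limsup_{r\to1}\frac{u(re^{i\theta})}{|\log(1-r)|}\ge d\quad\text{for every }\theta\in[0,2\pi).$$
   Context: $\mathbf D$ is the open unit disc. $\mathcal K$ is the class of harmonic functions $u$ on $\mathbf D$ for which there is a constant $C$ with $u(z)\le C\log\frac{e}{1-|z|}$ for all $z\in\mathbf D$. *)

(* Defs.v *)
From Stdlib Require Export Reals.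
From Coquelicot Require Export Coquelicot.
Open Scope R_scope.

Definition inD (z : C) : Prop := Cmod z < 1.

Definition dx (u : C -> R) (z : C) : R := Derive (fun t => u (t, snd z)) (fst z).
Definition dy (u : C -> R) (z : C) : R := Derive (fun t => u (fst z, t)) (snd z).

Definition C2_at (u : C -> R) (z : C) : Prop :=
  ex_derive (fun t => u (t, snd z)) (fst z) /\
  ex_derive (fun t => u (fst z, t)) (snd z) /\
  ex_derive (fun t => dx u (t, snd z)) (fst z) /\
  ex_derive (fun t => dx u (fst z, t)) (snd z) /\
  ex_derive (fun t => dy u (t, snd z)) (fst z) /\
  ex_derive (fun t => dy u (fst z, t)) (snd z) /\
  continuous u z /\ continuous (dx u) z /\ continuous (dy u) z /\
  continuous (dx (dx u)) z /\ continuous (dy (dx u)) z /\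
  continuous (dx (dy u)) z /\ continuous (dy (dy u)) z.

Definition harmonic_on_D (u : C -> R) : Prop :=
  forall z, inD z -> C2_at u z /\ dx (dx u) z + dy (dy u) z = 0.

Definition classK (u : C -> R) : Prop :=
  harmonic_on_D u /\
  exists Cst : R, forall z, inD z -> u z <= Cst * ln (exp 1 / (1 - Cmod z)).

Definition polar (r theta : R) : C := (r * cos theta, r * sin theta).

(* Main.v *)
Require Import Defs.
From Stdlib Require Import Lra Lia Psatz Arith.

Lemma is_series_eps (M : nat -> R) : ex_series M ->
  forall eps, 0 < eps -> exists N, forall n, (N <= n)%nat -> Rabs (sum_n M n - Series M) < eps.
Proof.
  intros HM eps Heps.
  assert (H := Series_correct _ HM).
  assert (H2 : is_lim_seq (sum_n M) (Series M)) by exact H.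
  apply is_lim_seq_spec in H2.
  destruct (H2 (mkposreal eps Heps)) as [N HN].
  exists N. intros n Hn. apply HN. exact Hn.
Qed.

Lemma tail_small (M : nat -> R) : ex_series M ->
  forall eps, 0 < eps -> exists N, forall n, (N <= n)%nat ->
    Rabs (Series (fun k => M (S n + k)%nat)) < eps.
Proof.
  intros HM eps Heps. destruct (is_series_eps M HM eps Heps) as [N HN].
  exists N. intros n Hn.
  rewrite (Series_incr_n M (S n)) in HN by (lia || exact HM).
  specialize (HN n Hn). rewrite sum_n_Reals in HN. simpl pred in HN.
  replace (sum_f_R0 M n - (sum_f_R0 M n + Series (fun k => M (S n + k)%nat)))
    with (- Series (fun k => M (S n + k)%nat)) in HN by ring.
  rewrite Rabs_Ropp in HN. exact HN.
Qed.

Lemma ex_series_ev (b M : nat -> R) (K : nat) :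
  (forall k, (K <= k)%nat -> Rabs (b k) <= M k) -> ex_series M -> ex_series b.
Proof.
  intros Hb HM.
  apply (ex_series_incr_n b K).
  apply (ex_series_le (fun k => b (K + k)%nat) (fun k => M (K + k)%nat)).
  - intros k. apply Hb. lia.
  - apply (ex_series_incr_n M K). exact HM.
Qed.

Lemma ex_series_ev_abs (b M : nat -> R) (K : nat) :
  (forall k, (K <= k)%nat -> Rabs (b k) <= M k) -> ex_series M -> ex_series (fun k => Rabs (b k)).
Proof.
  intros Hb HM. apply (ex_series_ev _ M K); auto.
  intros k Hk. rewrite Rabs_Rabsolu. auto.
Qed.

Lemma series_tail_bound (b M : nat -> R) (K n : nat) :
  (forall k, (K <= k)%nat -> Rabs (b k) <= M k) -> ex_series M -> (K <= n)%nat ->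
  Rabs (Series (fun k => b (n + k)%nat)) <= Series (fun k => M (n + k)%nat).
Proof.
  intros Hb HM Hn.
  assert (HM' : ex_series (fun k => M (n + k)%nat)) by (apply ex_series_incr_n; exact HM).
  assert (Hb' : ex_series (fun k => Rabs (b (n + k)%nat))).
  { apply (ex_series_ev_abs _ (fun k => M (n + k)%nat) 0); auto. intros k _. apply Hb. lia. }
  eapply Rle_trans. apply Series_Rabs. exact Hb'.
  apply Series_le; auto. intros k. split. apply Rabs_pos. apply Hb. lia.
Qed.

Lemma finite_sum_lim {T} (P : R -> T -> Prop) (c : nat -> T -> R) :
  (forall d1 d2 h, d1 <= d2 -> P d1 h -> P d2 h) ->
  (forall k eps, 0 < eps -> exists d, 0 < d /\ forall h, P d h -> Rabs (c k h) < eps) ->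
  forall m eps, 0 < eps -> exists d, 0 < d /\ forall h, P d h -> Rabs (sum_f_R0 (fun k => c k h) m) < eps.
Proof.
  intros Hmono Hc m. induction m as [|m IH]; intros eps Heps.
  - simpl. apply Hc. exact Heps.
  - destruct (IH (eps/2)) as [d1 [Hd1 H1]]; [lra|].
    destruct (Hc (S m) (eps/2)) as [d2 [Hd2 H2]]; [lra|].
    exists (Rmin d1 d2). split. apply Rmin_pos; auto.
    intros h Hh. simpl.
    assert (A1 := H1 h (Hmono _ _ _ (Rmin_l _ _) Hh)).
    assert (A2 := H2 h (Hmono _ _ _ (Rmin_r _ _) Hh)).
    eapply Rle_lt_trans. apply Rabs_triang. lra.
Qed.

Lemma tannery {T} (P : R -> T -> Prop) (a : nat -> T -> R) (L M : nat -> R) (K : nat) (d0 : R) :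
  0 < d0 ->
  (forall d1 d2 h, d1 <= d2 -> P d1 h -> P d2 h) ->
  (forall k eps, 0 < eps -> exists d, 0 < d /\ forall h, P d h -> Rabs (a k h - L k) < eps) ->
  (forall k h, (K <= k)%nat -> P d0 h -> Rabs (a k h) <= M k) ->
  (forall k, (K <= k)%nat -> Rabs (L k) <= M k) ->
  ex_series M ->
  forall eps, 0 < eps -> exists d, 0 < d /\ forall h, P d h ->
     Rabs (Series (fun k => a k h) - Series L) < eps.
Proof.
  intros Hd0 Hmono Hlim Hba HbL HM eps Heps.
  destruct (tail_small M HM (eps/4)) as [N HN]; [lra|].
  set (n := max N K).
  destruct (finite_sum_lim P (fun k h => a k h - L k) Hmono Hlim n (eps/4)) as [d1 [Hd1 H1]]; [lra|].
  exists (Rmin d0 d1). split. apply Rmin_pos; auto.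
  intros h Hh.
  assert (Hh0 := Hmono _ _ _ (Rmin_l _ _) Hh).
  assert (Hh1 := Hmono _ _ _ (Rmin_r _ _) Hh).
  assert (Exa : ex_series (fun k => a k h)) by (apply (ex_series_ev _ M K); auto).
  assert (ExL : ex_series L) by (apply (ex_series_ev _ M K); auto).
  rewrite (Series_incr_n _ (S n)) by (lia || auto).
  rewrite (Series_incr_n L (S n)) by (lia || auto).
  simpl pred.
  assert (Ta := series_tail_bound (fun k => a k h) M K (S n) (fun k Hk => Hba k h Hk Hh0) HM ltac:(lia)).
  assert (TL := series_tail_bound L M K (S n) HbL HM ltac:(lia)).
  assert (TM := HN n ltac:(lia)).
  assert (F := H1 h Hh1).
  rewrite (minus_sum (fun k => a k h) L) in F.
  assert (Hpos : 0 <= Series (fun k => M (S n + k)%nat)).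
  { eapply Rle_trans. apply Rabs_pos. exact TL. }
  rewrite Rabs_pos_eq in TM by exact Hpos.
  set (A1 := sum_f_R0 (fun k => a k h) n) in *.
  set (A2 := sum_f_R0 L n) in *.
  set (B1 := Series (fun k => a (S n + k)%nat h)) in *.
  set (B2 := Series (fun k => L (S n + k)%nat)) in *.
  replace (A1 + B1 - (A2 + B2)) with ((A1 - A2) + (B1 - B2)) by ring.
  eapply Rle_lt_trans. apply Rabs_triang.
  assert (Rabs (B1 - B2) <= Rabs B1 + Rabs B2).
  { unfold Rminus. eapply Rle_trans. apply Rabs_triang. rewrite Rabs_Ropp. lra. }
  lra.
Qed.

Lemma mvt_bound (f df : R -> R) (x0 d0 Mb h : R) :
  (forall t, Rabs (t - x0) < d0 -> is_derive f t (df t)) ->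
  (forall t, Rabs (t - x0) < d0 -> Rabs (df t) <= Mb) ->
  Rabs h < d0 ->
  Rabs (f (x0 + h) - f x0) <= Mb * Rabs h.
Proof.
  intros Hd Hb Hh.
  assert (Hin : forall t, Rmin x0 (x0+h) <= t <= Rmax x0 (x0+h) -> Rabs (t - x0) < d0).
  { intros t [H1 H2]. unfold Rmin, Rmax in *.
    destruct (Rle_dec x0 (x0+h)); apply Rabs_def1; apply Rabs_def2 in Hh; lra. }
  destruct (MVT_gen f x0 (x0+h) df) as [c [Hc Heq]].
  - intros t Ht. apply Hd. apply Hin. lra.
  - intros t Ht. apply continuity_pt_filterlim.
    assert (Cc : continuous f t).
    { apply (ex_derive_continuous (K:=R_AbsRing) (V:=R_NormedModule)).
      eexists. apply Hd. apply Hin. exact Ht. }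
    exact Cc.
  - rewrite Heq. replace (x0 + h - x0) with h by ring. rewrite Rabs_mult.
    apply Rmult_le_compat_r. apply Rabs_pos. apply Hb. apply Hin. exact Hc.
Qed.

Lemma series_derive (g g' : nat -> R -> R) (x0 d0 : R) (M : nat -> R) (K : nat) :
  0 < d0 ->
  (forall k t, Rabs (t - x0) < d0 -> is_derive (g k) t (g' k t)) ->
  (forall k t, (K <= k)%nat -> Rabs (t - x0) < d0 -> Rabs (g' k t) <= M k) ->
  ex_series M ->
  (forall t, Rabs (t - x0) < d0 -> ex_series (fun k => g k t)) ->
  is_derive (fun t => Series (fun k => g k t)) x0 (Series (fun k => g' k x0)).
Proof.
  intros Hd0 Hd Hb HM Hex.
  apply is_derive_Reals. intros eps Heps.
  destruct (tannery (fun d h => h <> 0 /\ Rabs h < d)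
    (fun k h => (g k (x0 + h) - g k x0) / h) (fun k => g' k x0) M K d0 Hd0)
    with (eps := eps) as [d [Hdpos Hfin]]; auto.
  - intros d1 d2 h Hle [H1 H2]. split; auto. lra.
  - intros k e He. assert (D := Hd k x0 ltac:(rewrite Rminus_eq_0, Rabs_R0; lra)).
    apply is_derive_Reals in D. destruct (D e He) as [dl Hdl].
    exists dl. split. apply cond_pos. intros h [Hh1 Hh2]. apply Hdl; auto.
  - intros k h Hk [Hh1 Hh2].
    assert (B := mvt_bound (g k) (g' k) x0 d0 (M k) h (Hd k) (fun t Ht => Hb k t Hk Ht) Hh2).
    unfold Rdiv. rewrite Rabs_mult, Rabs_Rinv by exact Hh1.
    apply (Rmult_le_reg_r (Rabs h)). apply Rabs_pos_lt; auto.
    rewrite Rmult_assoc, Rinv_l. lra. apply Rabs_no_R0; auto.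
  - intros k Hk. apply Hb; auto. rewrite Rminus_eq_0, Rabs_R0; lra.
  - assert (Hm : 0 < Rmin d d0) by (apply Rmin_pos; auto).
    exists (mkposreal _ Hm). intros h Hh1 Hh2. simpl in Hh2.
    assert (Hh3 : Rabs h < d) by (eapply Rlt_le_trans; [exact Hh2| apply Rmin_l]).
    assert (Hh4 : Rabs h < d0) by (eapply Rlt_le_trans; [exact Hh2| apply Rmin_r]).
    specialize (Hfin h (conj Hh1 Hh3)).
    unfold Rdiv in Hfin. rewrite Series_scal_r, Series_minus in Hfin.
    + exact Hfin.
    + apply Hex. replace (x0 + h - x0) with h by ring. exact Hh4.
    + apply Hex. rewrite Rminus_eq_0, Rabs_R0; lra.
Qed.

Lemma cont_eps (f : C -> R) (z0 : C) : continuous f z0 ->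
  forall eps, 0 < eps -> exists d, 0 < d /\ forall z, ball z0 d z -> Rabs (f z - f z0) < eps.
Proof.
  intros Hc eps Heps.
  assert (H : locally z0 (fun z => ball (f z0) eps (f z))).
  { apply Hc. exists (mkposreal eps Heps). intros y Hy. exact Hy. }
  destruct H as [d Hd]. exists d. split. apply cond_pos.
  intros z Hz. specialize (Hd z Hz). exact Hd.
Qed.

Lemma eps_cont (f : C -> R) (z0 : C) :
  (forall eps, 0 < eps -> exists d, 0 < d /\ forall z, ball z0 d z -> Rabs (f z - f z0) < eps) ->
  continuous f z0.
Proof.
  intros H P [eps HP].
  destruct (H eps (cond_pos eps)) as [d [Hd Hz]].
  exists (mkposreal d Hd). intros z Hz'. apply HP. apply Hz. exact Hz'.
Qed.

Lemma series_cont (g : nat -> C -> R) (z0 : C) (d0 : R) (M : nat -> R) (K : nat) :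
  0 < d0 ->
  (forall k, continuous (g k) z0) ->
  (forall k z, (K <= k)%nat -> ball z0 d0 z -> Rabs (g k z) <= M k) ->
  ex_series M ->
  continuous (fun z => Series (fun k => g k z)) z0.
Proof.
  intros Hd0 Hc Hb HM. apply eps_cont. intros eps Heps.
  apply (tannery (fun d z => ball z0 d z) g (fun k => g k z0) M K d0); auto.
  - intros d1 d2 h Hle Hb1. eapply ball_le; eauto.
  - intros k e He. apply cont_eps; auto.
  - intros k Hk. apply Hb; auto. apply (ball_center z0 (mkposreal d0 Hd0)).
Qed.

Lemma ballR_iff (x0 x d : R) : ball x0 d x <-> Rabs (x - x0) < d.
Proof. reflexivity. Qed.

Lemma ballC_iff (z0 z : C) (d : R) : ball z0 d z <-> Rabs (fst z - fst z0) < d /\ Rabs (snd z - snd z0) < d.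
Proof. reflexivity. Qed.

Lemma cont_fst (z : C) : continuous (fun w : C => fst w) z.
Proof. apply eps_cont. intros e He. exists e. split; auto. intros w [Hw1 Hw2]. cbv beta. first [exact Hw1|exact Hw2]. Qed.
Lemma cont_snd (z : C) : continuous (fun w : C => snd w) z.
Proof. apply eps_cont. intros e He. exists e. split; auto. intros w [Hw1 Hw2]. cbv beta. first [exact Hw1|exact Hw2]. Qed.
Lemma cont_const (c : R) (z : C) : continuous (fun _ : C => c) z.
Proof. apply eps_cont. intros e He. exists e. split; auto. intros w Hw. rewrite Rminus_eq_0, Rabs_R0. lra. Qed.
Lemma cont_mult (f g : C -> R) (z : C) : continuous f z -> continuous g z -> continuous (fun w => f w * g w) z.
Proof. intros H1 H2; apply (continuous_mult (K:=R_AbsRing)); auto. Qed.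
Lemma cont_plus (f g : C -> R) (z : C) : continuous f z -> continuous g z -> continuous (fun w => f w + g w) z.
Proof. intros H1 H2; apply (continuous_plus (K:=R_AbsRing) (V:=R_NormedModule)); auto. Qed.
Lemma cont_opp (f : C -> R) (z : C) : continuous f z -> continuous (fun w => - f w) z.
Proof. intro H.
  apply (continuous_ext (fun w => (-1) * f w)). intros x; simpl; ring.
  apply (cont_mult (fun _ => -1) f); auto. apply cont_const. Qed.

Lemma cont_Cpow (n : nat) (z : C) :
  continuous (fun w => fst (Cpow w n)) z /\ continuous (fun w => snd (Cpow w n)) z.
Proof.
  induction n as [|n [IH1 IH2]].
  - simpl. split; apply cont_const.
  - simpl. split.
    + apply cont_plus. apply cont_mult. apply cont_fst. auto.
      apply cont_opp. apply cont_mult. apply cont_snd. auto.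
    + apply cont_plus. apply cont_mult. apply cont_fst. auto.
      apply cont_mult. apply cont_snd. auto.
Qed.

Lemma cont_comp_pow (F : C -> R) (n : nat) (z : C) :
  continuous F (Cpow z n) -> continuous (fun w => F (Cpow w n)) z.
Proof.
  intros HF. apply eps_cont. intros e He.
  destruct (cont_eps F _ HF e He) as [d [Hd HFd]].
  destruct (cont_Cpow n z) as [C1 C2].
  destruct (cont_eps _ _ C1 d Hd) as [d1 [Hd1 H1]].
  destruct (cont_eps _ _ C2 d Hd) as [d2 [Hd2 H2]].
  exists (Rmin d1 d2). split. apply Rmin_pos; auto.
  intros w Hw.
  assert (Hw1 : ball z d1 w) by (eapply ball_le; [apply Rmin_l|exact Hw]).
  assert (Hw2 : ball z d2 w) by (eapply ball_le; [apply Rmin_r|exact Hw]).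
  apply HFd. split.
  apply H1; auto. apply H2; auto.
Qed.

Lemma D_mult (f g : R -> R) (x a b : R) : is_derive f x a -> is_derive g x b ->
  is_derive (fun t => f t * g t) x (a * g x + f x * b).
Proof. intros Ha Hb. apply is_derive_Reals. apply is_derive_Reals in Ha, Hb.
  apply (derivable_pt_lim_mult f g x a b Ha Hb). Qed.
Lemma D_plus (f g : R -> R) (x a b : R) : is_derive f x a -> is_derive g x b ->
  is_derive (fun t => f t + g t) x (a + b).
Proof. intros Ha Hb. apply is_derive_Reals. apply is_derive_Reals in Ha, Hb.
  apply (derivable_pt_lim_plus f g x a b Ha Hb). Qed.
Lemma D_minus (f g : R -> R) (x a b : R) : is_derive f x a -> is_derive g x b ->
  is_derive (fun t => f t - g t) x (a - b).
Proof. intros Ha Hb. apply is_derive_Reals. apply is_derive_Reals in Ha, Hb.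
  apply (derivable_pt_lim_minus f g x a b Ha Hb). Qed.
Lemma D_const (c x : R) : is_derive (fun _ => c) x 0.
Proof. apply is_derive_Reals. apply derivable_pt_lim_const. Qed.
Lemma D_id (x : R) : is_derive (fun t => t) x 1.
Proof. apply is_derive_Reals. apply derivable_pt_lim_id. Qed.
Lemma D_eq (f : R -> R) (x a b : R) : is_derive f x a -> a = b -> is_derive f x b.
Proof. intros H ->. exact H. Qed.

Lemma Cpow_S (z : C) (n : nat) : Cpow z (S n) = (fst z * fst (Cpow z n) - snd z * snd (Cpow z n), fst z * snd (Cpow z n) + snd z * fst (Cpow z n)).
Proof. reflexivity. Qed.

Lemma pow_dx (x y : R) (N : nat) :
  is_derive (fun t => fst (Cpow (t,y) N)) x (INR N * fst (Cpow (x,y) (N-1))) /\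
  is_derive (fun t => snd (Cpow (t,y) N)) x (INR N * snd (Cpow (x,y) (N-1))).
Proof.
  induction N as [|n [IH1 IH2]].
  - simpl. split; eapply D_eq; try apply D_const; ring.
  - split.
    + change (is_derive (fun t => t * fst (Cpow (t,y) n) - y * snd (Cpow (t,y) n)) x
        (INR (S n) * fst (Cpow (x, y) (S n - 1)))).
      eapply D_eq. apply D_minus; apply D_mult. apply D_id. exact IH1. apply D_const. exact IH2.
      cbv beta. destruct n as [|m].
      * cbn [Cpow]. replace (0 - 1)%nat with 0%nat by lia. cbn [fst snd]. simpl. ring.
      * replace (S (S m) - 1)%nat with (S m) by lia. replace (S m - 1)%nat with m by lia.
        repeat rewrite Cpow_S. cbn [fst snd]. rewrite (S_INR (S m)). change (AbsRing.sort R_AbsRing) with R. ring.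
    + change (is_derive (fun t => t * snd (Cpow (t,y) n) + y * fst (Cpow (t,y) n)) x
        (INR (S n) * snd (Cpow (x, y) (S n - 1)))).
      eapply D_eq. apply D_plus; apply D_mult. apply D_id. exact IH2. apply D_const. exact IH1.
      cbv beta. destruct n as [|m].
      * cbn [Cpow]. replace (0 - 1)%nat with 0%nat by lia. cbn [fst snd]. simpl. ring.
      * replace (S (S m) - 1)%nat with (S m) by lia. replace (S m - 1)%nat with m by lia.
        repeat rewrite Cpow_S. cbn [fst snd]. rewrite (S_INR (S m)). change (AbsRing.sort R_AbsRing) with R. ring.
Qed.

Lemma pow_dy (x y : R) (N : nat) :
  is_derive (fun t => fst (Cpow (x,t) N)) y (- (INR N * snd (Cpow (x,y) (N-1)))) /\
  is_derive (fun t => snd (Cpow (x,t) N)) y (INR N * fst (Cpow (x,y) (N-1))).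
Proof.
  induction N as [|n [IH1 IH2]].
  - simpl. split; eapply D_eq; try apply D_const; ring.
  - split.
    + change (is_derive (fun t => x * fst (Cpow (x,t) n) - t * snd (Cpow (x,t) n)) y
        (- (INR (S n) * snd (Cpow (x, y) (S n - 1))))).
      eapply D_eq. apply D_minus; apply D_mult. apply D_const. exact IH1. apply D_id. exact IH2.
      cbv beta. destruct n as [|m].
      * cbn [Cpow]. replace (0 - 1)%nat with 0%nat by lia. cbn [fst snd]. simpl. ring.
      * replace (S (S m) - 1)%nat with (S m) by lia. replace (S m - 1)%nat with m by lia.
        repeat rewrite Cpow_S. cbn [fst snd]. rewrite (S_INR (S m)).
        change (AbsRing.sort R_AbsRing) with R. ring.
    + change (is_derive (fun t => x * snd (Cpow (x,t) n) + t * fst (Cpow (x,t) n)) y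
        (INR (S n) * fst (Cpow (x, y) (S n - 1)))).
      eapply D_eq. apply D_plus; apply D_mult. apply D_const. exact IH2. apply D_id. exact IH1.
      cbv beta. destruct n as [|m].
      * cbn [Cpow]. replace (0 - 1)%nat with 0%nat by lia. cbn [fst snd]. simpl. ring.
      * replace (S (S m) - 1)%nat with (S m) by lia. replace (S m - 1)%nat with m by lia.
        repeat rewrite Cpow_S. cbn [fst snd]. rewrite (S_INR (S m)).
        change (AbsRing.sort R_AbsRing) with R. ring.
Qed.

Lemma Cmod_pow (z : C) (n : nat) : Cmod (Cpow z n) = Cmod z ^ n.
Proof.
  induction n as [|n IH]. simpl. apply Cmod_1.
  change (Cpow z (S n)) with (Cmult z (Cpow z n)). rewrite Cmod_mult, IH. reflexivity.
Qed.

Lemma fst_le_Cmod (z : C) : Rabs (fst z) <= Cmod z.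
Proof.
  destruct z as [a b]. unfold Cmod. simpl. rewrite <- sqrt_Rsqr_abs.
  apply sqrt_le_1_alt. unfold Rsqr. nra.
Qed.
Lemma snd_le_Cmod (z : C) : Rabs (snd z) <= Cmod z.
Proof.
  destruct z as [a b]. unfold Cmod. simpl. rewrite <- sqrt_Rsqr_abs.
  apply sqrt_le_1_alt. unfold Rsqr. nra.
Qed.
Lemma Cmod_le_sum (z : C) : Cmod z <= Rabs (fst z) + Rabs (snd z).
Proof.
  destruct z as [a b]. unfold Cmod. simpl.
  rewrite <- (sqrt_Rsqr (Rabs a + Rabs b)) by (assert (0 <= Rabs a) by apply Rabs_pos; assert (0 <= Rabs b) by apply Rabs_pos; lra).
  apply sqrt_le_1_alt. unfold Rsqr.
  assert (0 <= Rabs a) by apply Rabs_pos. assert (0 <= Rabs b) by apply Rabs_pos.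
  assert (a * a = Rabs a * Rabs a) by (rewrite <- Rabs_mult; rewrite Rabs_pos_eq; nra).
  assert (b * b = Rabs b * Rabs b) by (rewrite <- Rabs_mult; rewrite Rabs_pos_eq; nra).
  nra.
Qed.

Lemma Cmod_near (z0 z : C) : Cmod z <= Cmod z0 + Rabs (fst z - fst z0) + Rabs (snd z - snd z0).
Proof.
  assert (E : z = Cplus z0 (fst z - fst z0, snd z - snd z0)).
  { destruct z, z0. unfold Cplus. simpl. f_equal; ring. }
  rewrite E at 1. eapply Rle_trans. apply Cmod_triangle.
  assert (H := Cmod_le_sum (fst z - fst z0, snd z - snd z0)). simpl in H. lra.
Qed.

Definition C1D (F : C -> R) : Prop := forall w, inD w ->
  ex_derive (fun t => F (t, snd w)) (fst w) /\ ex_derive (fun t => F (fst w, t)) (snd w) /\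
  continuous (dx F) w /\ continuous (dy F) w.

Lemma open_D (w : C) : inD w -> exists d, 0 < d /\
  forall u v, Rabs (u - fst w) < d -> Rabs (v - snd w) < d -> inD (u, v).
Proof.
  intros Hw. unfold inD in *. exists ((1 - Cmod w)/2). split. lra.
  intros u v Hu Hv. assert (H := Cmod_near w (u,v)). simpl in H. lra.
Qed.

Lemma D_lin (c x : R) : is_derive (fun t => c * t) x c.
Proof. eapply D_eq. apply D_mult. apply D_const. apply D_id. cbv beta. ring. Qed.

Lemma diff_C1D (F : C -> R) (w : C) : C1D F -> inD w ->
  differentiable_pt_lim (fun a b => F (a, b)) (fst w) (snd w) (dx F w) (dy F w).
Proof.
  intros HF Hw eps.
  destruct (open_D w Hw) as [d0 [Hd0 Hop]].
  destruct (HF w Hw) as [_ [Ey [Cx _]]].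
  destruct (cont_eps (dx F) w Cx (eps/2)) as [d1 [Hd1 H1]]. { destruct eps; simpl; lra. }
  assert (Dy : is_derive (fun t => F (fst w, t)) (snd w) (dy F w)).
  { apply Derive_correct in Ey. exact Ey. }
  apply is_derive_Reals in Dy.
  destruct (Dy (eps/2)) as [d2 Hd2]. { destruct eps; simpl; lra. }
  assert (Hd : 0 < Rmin d0 (Rmin d1 d2)). { apply Rmin_pos; auto. apply Rmin_pos; auto. apply cond_pos. }
  exists (mkposreal _ Hd). intros u v Hu Hv. simpl in Hu, Hv.
  assert (Hu0 : Rabs (u - fst w) < d0) by (eapply Rlt_le_trans; [exact Hu|apply Rmin_l]).
  assert (Hv0 : Rabs (v - snd w) < d0) by (eapply Rlt_le_trans; [exact Hv|apply Rmin_l]).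
  assert (Hu1 : Rabs (u - fst w) < d1) by (eapply Rlt_le_trans; [exact Hu|eapply Rle_trans; [apply Rmin_r|apply Rmin_l]]).
  assert (Hv1 : Rabs (v - snd w) < d1) by (eapply Rlt_le_trans; [exact Hv|eapply Rle_trans; [apply Rmin_r|apply Rmin_l]]).
  assert (Hv2 : Rabs (v - snd w) < d2) by (eapply Rlt_le_trans; [exact Hv|eapply Rle_trans; [apply Rmin_r|apply Rmin_r]]).
  set (x := fst w) in *. set (y := snd w) in *.
  assert (A : Rabs (F (u, v) - F (x, v) - dx F w * (u - x)) <= eps/2 * Rabs (u - x)).
  { assert (M := mvt_bound (fun t => F (t, v) - dx F w * t) (fun t => dx F (t, v) - dx F w)
       x (Rmin d0 d1) (eps/2) (u - x)).
    replace (x + (u - x)) with u in M by ring.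
    replace (F (u, v) - F (x, v) - dx F w * (u - x)) with
       (F (u, v) - dx F w * u - (F (x, v) - dx F w * x)) by ring.
    apply M.
    - intros t Ht. apply D_minus. 2: apply D_lin.
      assert (Hin : inD (t, v)). { apply Hop. eapply Rlt_le_trans; [exact Ht|apply Rmin_l]. exact Hv0. }
      destruct (HF (t, v) Hin) as [Ex _]. simpl in Ex.
      apply Derive_correct in Ex. exact Ex.
    - intros t Ht. left. apply H1. split; simpl.
      + eapply Rlt_le_trans; [exact Ht|apply Rmin_r].
      + exact Hv1.
    - apply Rmin_glb_lt; auto. }
  assert (B : Rabs (F (x, v) - F (x, y) - dy F w * (v - y)) <= eps/2 * Rabs (v - y)).
  { destruct (Req_dec v y) as [E|E].
    - subst v. rewrite !Rminus_eq_0. rewrite Rmult_0_r, Rminus_0_r, Rabs_R0, Rmult_0_r. lra.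
    - assert (Hh : v - y <> 0) by lra.
      specialize (Hd2 (v - y) Hh Hv2). replace (y + (v - y)) with v in Hd2 by ring.
      replace (F (x, v) - F (x, y) - dy F w * (v - y)) with
        (((F (x, v) - F (x, y)) / (v - y) - dy F w) * (v - y)) by (field; exact Hh).
      rewrite Rabs_mult. apply Rmult_le_compat_r. apply Rabs_pos. left. exact Hd2. }
  replace (F (u, v) - F (x, y) - (dx F w * (u - x) + dy F w * (v - y))) with
    ((F (u, v) - F (x, v) - dx F w * (u - x)) + (F (x, v) - F (x, y) - dy F w * (v - y))) by ring.
  eapply Rle_trans. apply Rabs_triang.
  assert (Rabs (u - x) <= Rmax (Rabs (u - x)) (Rabs (v - y))) by apply Rmax_l.
  assert (Rabs (v - y) <= Rmax (Rabs (u - x)) (Rabs (v - y))) by apply Rmax_r.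
  destruct eps as [e He]; simpl in *. nra.
Qed.

Definition qr (z : C) (N : nat) : R := INR N * fst (Cpow z (N-1)).
Definition qi (z : C) (N : nat) : R := INR N * snd (Cpow z (N-1)).

Lemma inD_pow (z : C) (N : nat) : inD z -> (1 <= N)%nat -> inD (Cpow z N).
Proof.
  unfold inD. intros H HN. rewrite Cmod_pow. apply pow_lt_1_compat. split; auto. apply Cmod_ge_0. lia.
Qed.

Lemma comp_dx (F : C -> R) (N : nat) (z : C) : C1D F -> (1 <= N)%nat -> inD z ->
  is_derive (fun t => F (Cpow (t, snd z) N)) (fst z)
     (dx F (Cpow z N) * qr z N + dy F (Cpow z N) * qi z N).
Proof.
  intros HF HN Hz.
  assert (Dif := diff_C1D F (Cpow z N) HF (inD_pow z N Hz HN)).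
  destruct z as [x y]. simpl.
  apply (is_derive_ext (fun t => (fun a b => F (a, b)) (fst (Cpow (t, y) N)) (snd (Cpow (t, y) N)))).
  { intros t. simpl. rewrite <- surjective_pairing. reflexivity. }
  destruct (pow_dx x y N) as [P1 P2].
  apply is_derive_Reals in P1, P2. apply is_derive_Reals.
  apply (derivable_pt_lim_comp_2d (fun a b => F (a, b))); auto.
Qed.

Lemma comp_dy (F : C -> R) (N : nat) (z : C) : C1D F -> (1 <= N)%nat -> inD z ->
  is_derive (fun t => F (Cpow (fst z, t) N)) (snd z)
     (- dx F (Cpow z N) * qi z N + dy F (Cpow z N) * qr z N).
Proof.
  intros HF HN Hz.
  assert (Dif := diff_C1D F (Cpow z N) HF (inD_pow z N Hz HN)).
  destruct z as [x y]. simpl.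
  apply (is_derive_ext (fun t => (fun a b => F (a, b)) (fst (Cpow (x, t) N)) (snd (Cpow (x, t) N)))).
  { intros t. simpl. rewrite <- surjective_pairing. reflexivity. }
  destruct (pow_dy x y N) as [P1 P2].
  apply is_derive_Reals in P1, P2. apply is_derive_Reals.
  replace (- dx F (Cpow (x, y) N) * qi (x, y) N + dy F (Cpow (x, y) N) * qr (x, y) N) with
    (dx F (Cpow (x, y) N) * (- (INR N * snd (Cpow (x, y) (N - 1)))) +
     dy F (Cpow (x, y) N) * (INR N * fst (Cpow (x, y) (N - 1)))) by (unfold qr, qi; ring).
  apply (derivable_pt_lim_comp_2d (fun a b => F (a, b))); auto.
Qed.

Ltac myring := cbv beta; try change (AbsRing.sort R_AbsRing) with R in *; ring.

Lemma qr_dx x y N : is_derive (fun t => qr (t, y) N) x (INR N * qr (x, y) (N - 1)).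
Proof.
  unfold qr. eapply D_eq. apply D_mult. apply D_const. apply (proj1 (pow_dx x y (N-1))).
  myring.
Qed.
Lemma qi_dx x y N : is_derive (fun t => qi (t, y) N) x (INR N * qi (x, y) (N - 1)).
Proof.
  unfold qi. eapply D_eq. apply D_mult. apply D_const. apply (proj2 (pow_dx x y (N-1))).
  myring.
Qed.
Lemma qr_dy x y N : is_derive (fun t => qr (x, t) N) y (- (INR N * qi (x, y) (N - 1))).
Proof.
  unfold qr, qi. eapply D_eq. apply D_mult. apply D_const. apply (proj1 (pow_dy x y (N-1))).
  myring.
Qed.
Lemma qi_dy x y N : is_derive (fun t => qi (x, t) N) y (INR N * qr (x, y) (N - 1)).
Proof.
  unfold qr, qi. eapply D_eq. apply D_mult. apply D_const. apply (proj2 (pow_dy x y (N-1))).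
  myring.
Qed.


Definition G0 (h : C -> R) (c : R) (N : nat) (z : C) : R := c * h (Cpow z N).
Definition G1 (h : C -> R) (c : R) (N : nat) (z : C) : R :=
  c * (dx h (Cpow z N) * qr z N + dy h (Cpow z N) * qi z N).
Definition G2 (h : C -> R) (c : R) (N : nat) (z : C) : R :=
  c * (- dx h (Cpow z N) * qi z N + dy h (Cpow z N) * qr z N).
Definition G11 (h : C -> R) (c : R) (N : nat) (z : C) : R :=
  c * ((dx (dx h) (Cpow z N) * qr z N + dy (dx h) (Cpow z N) * qi z N) * qr z N
       + dx h (Cpow z N) * (INR N * qr z (N-1))
       + (dx (dy h) (Cpow z N) * qr z N + dy (dy h) (Cpow z N) * qi z N) * qi z N
       + dy h (Cpow z N) * (INR N * qi z (N-1))).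
Definition G12 (h : C -> R) (c : R) (N : nat) (z : C) : R :=
  c * ((- dx (dx h) (Cpow z N) * qi z N + dy (dx h) (Cpow z N) * qr z N) * qr z N
       + dx h (Cpow z N) * (- (INR N * qi z (N-1)))
       + (- dx (dy h) (Cpow z N) * qi z N + dy (dy h) (Cpow z N) * qr z N) * qi z N
       + dy h (Cpow z N) * (INR N * qr z (N-1))).
Definition G21 (h : C -> R) (c : R) (N : nat) (z : C) : R :=
  c * (- (dx (dx h) (Cpow z N) * qr z N + dy (dx h) (Cpow z N) * qi z N) * qi z N
       - dx h (Cpow z N) * (INR N * qi z (N-1))
       + (dx (dy h) (Cpow z N) * qr z N + dy (dy h) (Cpow z N) * qi z N) * qr z N
       + dy h (Cpow z N) * (INR N * qr z (N-1))).
Definition G22 (h : C -> R) (c : R) (N : nat) (z : C) : R :=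
  c * (- (- dx (dx h) (Cpow z N) * qi z N + dy (dx h) (Cpow z N) * qr z N) * qi z N
       - dx h (Cpow z N) * (INR N * qr z (N-1))
       + (- dx (dy h) (Cpow z N) * qi z N + dy (dy h) (Cpow z N) * qr z N) * qr z N
       + dy h (Cpow z N) * (- (INR N * qi z (N-1)))).

Lemma C1D_h h : harmonic_on_D h -> C1D h.
Proof. intros H w Hw. destruct (H w Hw) as [C _]. unfold C2_at in C. tauto. Qed.
Lemma C1D_h1 h : harmonic_on_D h -> C1D (dx h).
Proof. intros H w Hw. destruct (H w Hw) as [C _]. unfold C2_at in C. tauto. Qed.
Lemma C1D_h2 h : harmonic_on_D h -> C1D (dy h).
Proof. intros H w Hw. destruct (H w Hw) as [C _]. unfold C2_at in C. tauto. Qed.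

Lemma G0_dx h c N x y : harmonic_on_D h -> (1 <= N)%nat -> inD (x, y) ->
  is_derive (fun t => G0 h c N (t, y)) x (G1 h c N (x, y)).
Proof.
  intros Hh HN Hz. unfold G0, G1. eapply D_eq. apply D_mult. apply D_const.
  apply (comp_dx h N (x, y) (C1D_h h Hh) HN Hz). myring.
Qed.
Lemma G0_dy h c N x y : harmonic_on_D h -> (1 <= N)%nat -> inD (x, y) ->
  is_derive (fun t => G0 h c N (x, t)) y (G2 h c N (x, y)).
Proof.
  intros Hh HN Hz. unfold G0, G2. eapply D_eq. apply D_mult. apply D_const.
  apply (comp_dy h N (x, y) (C1D_h h Hh) HN Hz). myring.
Qed.

Lemma G1_dx h c N x y : harmonic_on_D h -> (1 <= N)%nat -> inD (x, y) ->
  is_derive (fun t => G1 h c N (t, y)) x (G11 h c N (x, y)).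
Proof.
  intros Hh HN Hz. unfold G1, G11. eapply D_eq.
  apply D_mult. apply D_const. apply D_plus; apply D_mult.
  apply (comp_dx (dx h) N (x, y) (C1D_h1 h Hh) HN Hz). apply qr_dx.
  apply (comp_dx (dy h) N (x, y) (C1D_h2 h Hh) HN Hz). apply qi_dx.
  simpl fst; simpl snd. myring.
Qed.

Lemma G1_dy h c N x y : harmonic_on_D h -> (1 <= N)%nat -> inD (x, y) ->
  is_derive (fun t => G1 h c N (x, t)) y (G12 h c N (x, y)).
Proof.
  intros Hh HN Hz. unfold G1, G12. eapply D_eq.
  apply D_mult. apply D_const. apply D_plus; apply D_mult.
  apply (comp_dy (dx h) N (x, y) (C1D_h1 h Hh) HN Hz). apply qr_dy.
  apply (comp_dy (dy h) N (x, y) (C1D_h2 h Hh) HN Hz). apply qi_dy.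
  simpl fst; simpl snd. myring.
Qed.

Lemma G2_dx h c N x y : harmonic_on_D h -> (1 <= N)%nat -> inD (x, y) ->
  is_derive (fun t => G2 h c N (t, y)) x (G21 h c N (x, y)).
Proof.
  intros Hh HN Hz. unfold G2, G21. eapply D_eq.
  apply D_mult. apply D_const. apply D_plus; apply D_mult.
  apply (is_derive_ext (fun t => (-1) * dx h (Cpow (t, y) N))). intro t. lra.
  apply D_mult. apply D_const.
  apply (comp_dx (dx h) N (x, y) (C1D_h1 h Hh) HN Hz). apply qi_dx.
  apply (comp_dx (dy h) N (x, y) (C1D_h2 h Hh) HN Hz). apply qr_dx.
  simpl fst; simpl snd. myring.
Qed.

Lemma G2_dy h c N x y : harmonic_on_D h -> (1 <= N)%nat -> inD (x, y) ->
  is_derive (fun t => G2 h c N (x, t)) y (G22 h c N (x, y)).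
Proof.
  intros Hh HN Hz. unfold G2, G22. eapply D_eq.
  apply D_mult. apply D_const. apply D_plus; apply D_mult.
  apply (is_derive_ext (fun t => (-1) * dx h (Cpow (x, t) N))). intro t. lra.
  apply D_mult. apply D_const.
  apply (comp_dy (dx h) N (x, y) (C1D_h1 h Hh) HN Hz). apply qi_dy.
  apply (comp_dy (dy h) N (x, y) (C1D_h2 h Hh) HN Hz). apply qr_dy.
  simpl fst; simpl snd. myring.
Qed.

Lemma G_lap h c N z : harmonic_on_D h -> (1 <= N)%nat -> inD z ->
  G11 h c N z + G22 h c N z = 0.
Proof.
  intros Hh HN Hz. destruct (Hh (Cpow z N) (inD_pow z N Hz HN)) as [_ L].
  unfold G11, G22.
  replace (dy (dy h) (Cpow z N)) with (- dx (dx h) (Cpow z N)) by lra. ring.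
Qed.

Lemma cont_minus (f g : C -> R) (z : C) : continuous f z -> continuous g z -> continuous (fun w => f w - g w) z.
Proof. intros H1 H2. apply cont_plus; auto. apply cont_opp; auto. Qed.

Ltac cont_tac :=
  repeat match goal with
  | |- continuous (fun _ => ?c) _ => apply (cont_const c)
  | |- continuous (fun w => @?f w + @?g w) _ => apply (cont_plus f g)
  | |- continuous (fun w => @?f w - @?g w) _ => apply (cont_minus f g)
  | |- continuous (fun w => @?f w * @?g w) _ => apply (cont_mult f g)
  | |- continuous (fun w => - @?f w) _ => apply (cont_opp f)
  | |- continuous (fun w => fst (Cpow w ?n)) _ => apply (proj1 (cont_Cpow n _))
  | |- continuous (fun w => snd (Cpow w ?n)) _ => apply (proj2 (cont_Cpow n _))
  | |- continuous (fun w => ?F (Cpow w ?n)) _ => apply (cont_comp_pow F n); assumption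
  end.

Lemma h_conts h p : harmonic_on_D h -> inD p ->
  continuous h p /\ continuous (dx h) p /\ continuous (dy h) p /\
  continuous (dx (dx h)) p /\ continuous (dy (dx h)) p /\
  continuous (dx (dy h)) p /\ continuous (dy (dy h)) p.
Proof. intros H Hp. destruct (H p Hp) as [C _]. unfold C2_at in C. tauto. Qed.

Lemma G1_cont h c N z : harmonic_on_D h -> (1 <= N)%nat -> inD z -> continuous (G1 h c N) z.
Proof.
  intros Hh HN Hz.
  destruct (h_conts h (Cpow z N) Hh (inD_pow z N Hz HN)) as [c0 [c1 [c2 [c3 [c4 [c5 c6]]]]]].
  unfold G1, qr, qi.
  cont_tac.
Qed.

Lemma G_conts h c N z : harmonic_on_D h -> (1 <= N)%nat -> inD z ->
  continuous (G0 h c N) z /\ continuous (G1 h c N) z /\ continuous (G2 h c N) z /\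
  continuous (G11 h c N) z /\ continuous (G12 h c N) z /\
  continuous (G21 h c N) z /\ continuous (G22 h c N) z.
Proof.
  intros Hh HN Hz.
  destruct (h_conts h (Cpow z N) Hh (inD_pow z N Hz HN)) as [c0 [c1 [c2 [c3 [c4 [c5 c6]]]]]].
  unfold G0, G1, G2, G11, G12, G21, G22, qr, qi.
  repeat split; cont_tac.
Qed.

Lemma fst_pow_bound (z : C) (m : nat) (rho : R) : Cmod z <= rho -> Rabs (fst (Cpow z m)) <= rho ^ m.
Proof.
  intros H. eapply Rle_trans. apply fst_le_Cmod. rewrite Cmod_pow. apply pow_incr. split; auto. apply Cmod_ge_0.
Qed.
Lemma snd_pow_bound (z : C) (m : nat) (rho : R) : Cmod z <= rho -> Rabs (snd (Cpow z m)) <= rho ^ m.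
Proof.
  intros H. eapply Rle_trans. apply snd_le_Cmod. rewrite Cmod_pow. apply pow_incr. split; auto. apply Cmod_ge_0.
Qed.

Definition Wb (rho : R) (N : nat) : R := INR N ^ 2 * rho ^ (N - 2).

Lemma pow_le_pow_dec (r : R) (m n : nat) : 0 <= r <= 1 -> (m <= n)%nat -> r ^ n <= r ^ m.
Proof.
  intros Hr Hmn. replace n with (m + (n - m))%nat by lia. rewrite pow_add.
  assert (0 <= r ^ m) by (apply pow_le; lra).
  assert (r ^ (n - m) <= 1) by (rewrite <- (pow1 (n - m)); apply pow_incr; lra).
  assert (0 <= r ^ (n - m)) by (apply pow_le; lra). nra.
Qed.

Lemma q_bounds (z : C) (N : nat) (rho : R) : (1 <= N)%nat -> 0 <= rho <= 1 -> Cmod z <= rho ->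
  Rabs (qr z N) <= Wb rho N /\ Rabs (qi z N) <= Wb rho N /\
  Rabs (INR N * qr z (N - 1)) <= Wb rho N /\ Rabs (INR N * qi z (N - 1)) <= Wb rho N.
Proof.
  intros HN Hr Hz. unfold qr, qi, Wb.
  assert (HN1 : 1 <= INR N) by (apply (le_INR 1); lia).
  assert (HNm : INR (N - 1) <= INR N) by (apply le_INR; lia).
  assert (HNm0 : 0 <= INR (N - 1)) by apply pos_INR.
  assert (P1 : rho ^ (N - 1) <= rho ^ (N - 2)) by (apply pow_le_pow_dec; auto; lia).
  assert (P0 : 0 <= rho ^ (N - 1)) by (apply pow_le; lra).
  assert (P2 : 0 <= rho ^ (N - 2)) by (apply pow_le; lra).
  assert (F1 := fst_pow_bound z (N - 1) rho Hz).
  assert (F2 := snd_pow_bound z (N - 1) rho Hz).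
  assert (F3 := fst_pow_bound z (N - 1 - 1) rho Hz).
  assert (F4 := snd_pow_bound z (N - 1 - 1) rho Hz).
  replace (N - 1 - 1)%nat with (N - 2)%nat in F3, F4 by lia.
  rewrite !Rabs_mult, !Rabs_pos_eq by lra.
  assert (A0 : 0 <= Rabs (fst (Cpow z (N - 1)))) by apply Rabs_pos.
  assert (A1 : 0 <= Rabs (snd (Cpow z (N - 1)))) by apply Rabs_pos.
  assert (A2 : 0 <= Rabs (fst (Cpow z (N - 1 - 1)))) by apply Rabs_pos.
  assert (A3 : 0 <= Rabs (snd (Cpow z (N - 1 - 1)))) by apply Rabs_pos.
  replace (N - 1 - 1)%nat with (N - 2)%nat in A2, A3 by lia.
  assert (K : INR N * rho ^ (N - 2) <= INR N ^ 2 * rho ^ (N - 2)).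
  { assert (0 <= (INR N - 1) * INR N * rho ^ (N - 2)) by (apply Rmult_le_pos; nra). simpl. nra. }
  repeat split.
  - assert (INR N * Rabs (fst (Cpow z (N - 1))) <= INR N * rho ^ (N - 2)) by nra. lra.
  - assert (INR N * Rabs (snd (Cpow z (N - 1))) <= INR N * rho ^ (N - 2)) by nra. lra.
  - replace (N - 1 - 1)%nat with (N - 2)%nat by lia.
    assert (INR (N - 1) * Rabs (fst (Cpow z (N - 2))) <= INR N * rho ^ (N - 2)) by nra.
    assert (INR N * (INR (N - 1) * Rabs (fst (Cpow z (N - 2)))) <= INR N * (INR N * rho ^ (N - 2))) by (apply Rmult_le_compat_l; lra).
    rewrite (Rabs_pos_eq (INR (N - 1))) by apply pos_INR.
    replace (INR N ^ 2 * rho ^ (N - 2)) with (INR N * (INR N * rho ^ (N - 2))) by ring. exact H0.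
  - replace (N - 1 - 1)%nat with (N - 2)%nat by lia.
    assert (INR (N - 1) * Rabs (snd (Cpow z (N - 2))) <= INR N * rho ^ (N - 2)) by nra.
    assert (INR N * (INR (N - 1) * Rabs (snd (Cpow z (N - 2)))) <= INR N * (INR N * rho ^ (N - 2))) by (apply Rmult_le_compat_l; lra).
    rewrite (Rabs_pos_eq (INR (N - 1))) by apply pos_INR.
    replace (INR N ^ 2 * rho ^ (N - 2)) with (INR N * (INR N * rho ^ (N - 2))) by ring. exact H0.
Qed.

Lemma abs_add (x y A B : R) : Rabs x <= A -> Rabs y <= B -> Rabs (x + y) <= A + B.
Proof. intros. eapply Rle_trans. apply Rabs_triang. lra. Qed.
Lemma abs_sub (x y A B : R) : Rabs x <= A -> Rabs y <= B -> Rabs (x - y) <= A + B.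
Proof. intros. eapply Rle_trans. apply Rabs_triang. rewrite Rabs_Ropp. lra. Qed.
Lemma abs_mul (x y A B : R) : Rabs x <= A -> Rabs y <= B -> Rabs (x * y) <= A * B.
Proof. intros. rewrite Rabs_mult. apply Rmult_le_compat; auto; apply Rabs_pos. Qed.
Lemma abs_opp (x A : R) : Rabs x <= A -> Rabs (- x) <= A.
Proof. intros. rewrite Rabs_Ropp. auto. Qed.
Lemma abs_refl (x : R) : Rabs x <= Rabs x.
Proof. lra. Qed.

Ltac bnd := first [ eassumption | eapply abs_add; [bnd|bnd] | eapply abs_sub; [bnd|bnd]
                  | eapply abs_mul; [bnd|bnd] | eapply abs_opp; bnd | apply abs_refl ].

Lemma G_bounds h B E c N z rho :
  (1 <= N)%nat -> 0 <= rho <= 1 -> Cmod z <= rho -> Wb rho N <= 1 -> 0 <= E -> 0 <= B ->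
  (forall w, inD w -> Rabs (h w) <= B * Cmod w) -> inD (Cpow z N) ->
  Rabs (dx h (Cpow z N)) <= E -> Rabs (dy h (Cpow z N)) <= E ->
  Rabs (dx (dx h) (Cpow z N)) <= E -> Rabs (dy (dx h) (Cpow z N)) <= E ->
  Rabs (dx (dy h) (Cpow z N)) <= E -> Rabs (dy (dy h) (Cpow z N)) <= E ->
  let Mb := Rabs c * (B + 6 * E) * Wb rho N in
  Rabs (G0 h c N z) <= Mb /\ Rabs (G1 h c N z) <= Mb /\ Rabs (G2 h c N z) <= Mb /\
  Rabs (G11 h c N z) <= Mb /\ Rabs (G12 h c N z) <= Mb /\
  Rabs (G21 h c N z) <= Mb /\ Rabs (G22 h c N z) <= Mb.
Proof.
  intros HN Hr Hz HW HE HB Hh Hp e1 e2 e3 e4 e5 e6 Mb.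
  destruct (q_bounds z N rho HN Hr Hz) as [q1 [q2 [q3 q4]]].
  assert (W0 : 0 <= Wb rho N). { unfold Wb. apply Rmult_le_pos. apply pow2_ge_0. apply pow_le; lra. }
  assert (C0 : 0 <= Rabs c) by apply Rabs_pos.
  assert (H0 : Rabs (h (Cpow z N)) <= B * Wb rho N).
  { eapply Rle_trans. apply Hh; auto. apply Rmult_le_compat_l; auto.
    rewrite Cmod_pow. unfold Wb.
    assert (rho ^ N <= rho ^ (N - 2)) by (apply pow_le_pow_dec; auto; lia).
    assert (Cmod z ^ N <= rho ^ N) by (apply pow_incr; split; auto; apply Cmod_ge_0).
    assert (1 <= INR N) by (apply (le_INR 1); lia).
    assert (0 <= rho ^ (N - 2)) by (apply pow_le; lra).
    assert (rho ^ (N - 2) <= INR N ^ 2 * rho ^ (N - 2)).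
    { replace (INR N ^ 2) with (INR N * INR N) by ring. assert (1 <= INR N * INR N) by nra. nra. }
    lra. }
  set (W := Wb rho N) in *.
  unfold Mb. unfold G0, G1, G2, G11, G12, G21, G22.
  assert (WW : W * W <= W) by nra.
  assert (CE : 0 <= Rabs c * E) by nra.
  repeat split; (eapply Rle_trans; [bnd|]).
  all: assert (T1 : Rabs c * E * (W * W) <= Rabs c * E * W) by (apply Rmult_le_compat_l; auto).
  all: assert (T2 : 0 <= Rabs c * W * B) by (apply Rmult_le_pos; [apply Rmult_le_pos|]; auto).
  all: assert (T3 : 0 <= Rabs c * E * W) by (apply Rmult_le_pos; auto).
  all: lra.
Qed.

Lemma one_bound (F : C -> R) (p : C) : continuous F p ->
  exists r, 0 < r /\ forall w, ball p r w -> Rabs (F w) <= Rabs (F p) + 1.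
Proof.
  intros Hc. destruct (cont_eps F p Hc 1 ltac:(lra)) as [r [Hr H]].
  exists r. split; auto. intros w Hw. specialize (H w Hw).
  replace (F w) with ((F w - F p) + F p) by ring.
  eapply Rle_trans. apply Rabs_triang. lra.
Qed.

Lemma E_bound (h : C -> R) : harmonic_on_D h ->
  exists r0 E, 0 < r0 /\ 0 <= E /\ forall w, Cmod w < r0 ->
    Rabs (dx h w) <= E /\ Rabs (dy h w) <= E /\
    Rabs (dx (dx h) w) <= E /\ Rabs (dy (dx h) w) <= E /\
    Rabs (dx (dy h) w) <= E /\ Rabs (dy (dy h) w) <= E.
Proof.
  intros Hh.
  assert (H0 : inD (0, 0)). { unfold inD. change (0,0) with (RtoC 0). rewrite Cmod_0. lra. }
  destruct (h_conts h (0,0) Hh H0) as [_ [c1 [c2 [c3 [c4 [c5 c6]]]]]].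
  destruct (one_bound _ _ c1) as [r1 [R1 B1]].
  destruct (one_bound _ _ c2) as [r2 [R2 B2]].
  destruct (one_bound _ _ c3) as [r3 [R3 B3]].
  destruct (one_bound _ _ c4) as [r4 [R4 B4]].
  destruct (one_bound _ _ c5) as [r5 [R5 B5]].
  destruct (one_bound _ _ c6) as [r6 [R6 B6]].
  set (r0 := Rmin r1 (Rmin r2 (Rmin r3 (Rmin r4 (Rmin r5 r6))))).
  set (E := Rabs (dx h (0,0)) + Rabs (dy h (0,0)) + Rabs (dx (dx h) (0,0)) + Rabs (dy (dx h) (0,0))
            + Rabs (dx (dy h) (0,0)) + Rabs (dy (dy h) (0,0)) + 1).
  assert (P : forall a, 0 <= Rabs a) by (intros; apply Rabs_pos).
  exists r0, E. split.
  { unfold r0. repeat apply Rmin_pos; auto. }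
  split. { unfold E. pose proof (P (dx h (0,0))). pose proof (P (dy h (0,0))).
    pose proof (P (dx (dx h) (0,0))). pose proof (P (dy (dx h) (0,0))).
    pose proof (P (dx (dy h) (0,0))). pose proof (P (dy (dy h) (0,0))). lra. }
  intros w Hw.
  assert (Bw : forall r, r0 <= r -> ball (0,0) r w).
  { intros r Hr. split; simpl.
    - change (Rabs (fst w - 0) < r). rewrite Rminus_0_r. eapply Rle_lt_trans. apply fst_le_Cmod. lra.
    - change (Rabs (snd w - 0) < r). rewrite Rminus_0_r. eapply Rle_lt_trans. apply snd_le_Cmod. lra. }
  assert (m1 : r0 <= r1) by (unfold r0; apply Rmin_l).
  assert (m2 : r0 <= r2) by (unfold r0; eapply Rle_trans; [apply Rmin_r|]; apply Rmin_l).
  assert (m3 : r0 <= r3) by (unfold r0; do 2 (eapply Rle_trans; [apply Rmin_r|]); apply Rmin_l).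
  assert (m4 : r0 <= r4) by (unfold r0; do 3 (eapply Rle_trans; [apply Rmin_r|]); apply Rmin_l).
  assert (m5 : r0 <= r5) by (unfold r0; do 4 (eapply Rle_trans; [apply Rmin_r|]); apply Rmin_l).
  assert (m6 : r0 <= r6) by (unfold r0; do 4 (eapply Rle_trans; [apply Rmin_r|]); apply Rmin_r).
  pose proof (B1 w (Bw _ m1)). pose proof (B2 w (Bw _ m2)). pose proof (B3 w (Bw _ m3)).
  pose proof (B4 w (Bw _ m4)). pose proof (B5 w (Bw _ m5)). pose proof (B6 w (Bw _ m6)).
  pose proof (P (dx h (0,0))). pose proof (P (dy h (0,0))).
  pose proof (P (dx (dx h) (0,0))). pose proof (P (dy (dx h) (0,0))).
  pose proof (P (dx (dy h) (0,0))). pose proof (P (dy (dy h) (0,0))).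
  unfold E. repeat split; lra.
Qed.

Lemma pow_le_Wb (rho : R) (N : nat) : 0 <= rho <= 1 -> (1 <= N)%nat -> rho ^ N <= Wb rho N.
Proof.
  intros Hr HN. unfold Wb.
  assert (rho ^ N <= rho ^ (N - 2)) by (apply pow_le_pow_dec; auto; lia).
  assert (1 <= INR N) by (apply (le_INR 1); lia).
  assert (0 <= rho ^ (N - 2)) by (apply pow_le; lra).
  assert (rho ^ (N - 2) <= INR N ^ 2 * rho ^ (N - 2)).
  { replace (INR N ^ 2) with (INR N * INR N) by ring. assert (1 <= INR N * INR N) by nra. nra. }
  lra.
Qed.

Definition Gbnds h c N z Mb : Prop :=
  Rabs (G0 h c N z) <= Mb /\ Rabs (G1 h c N z) <= Mb /\ Rabs (G2 h c N z) <= Mb /\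
  Rabs (G11 h c N z) <= Mb /\ Rabs (G12 h c N z) <= Mb /\
  Rabs (G21 h c N z) <= Mb /\ Rabs (G22 h c N z) <= Mb.

Lemma local_bounds h B (c : nat -> R) (N : nat -> nat) :
  harmonic_on_D h -> 0 <= B -> (forall w, inD w -> Rabs (h w) <= B * Cmod w) ->
  (forall k, (1 <= N k)%nat) ->
  (forall rho, 0 <= rho < 1 -> forall eps, 0 < eps -> exists K, forall k, (K <= k)%nat -> Wb rho (N k) < eps) ->
  forall z0, inD z0 -> exists d rho E K, 0 < d /\ 0 <= rho < 1 /\ 0 <= E /\
    (forall z, ball z0 d z -> inD z /\ Cmod z <= rho) /\
    forall k z, (K <= k)%nat -> ball z0 d z ->
      Gbnds h (c k) (N k) z (Rabs (c k) * (B + 6 * E) * Wb rho (N k)).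
Proof.
  intros Hh HB Hg HN HW z0 Hz0.
  destruct (E_bound h Hh) as [r0 [E [Hr0 [HE HEb]]]].
  set (rho := (1 + Cmod z0) / 2).
  assert (Hc0 := Cmod_ge_0 z0). unfold inD in Hz0.
  assert (Hrho : 0 <= rho < 1) by (unfold rho; lra).
  destruct (HW rho Hrho (Rmin r0 1) ltac:(apply Rmin_pos; lra)) as [K HK].
  exists ((1 - Cmod z0) / 4), rho, E, K.
  assert (Near : forall z, ball z0 ((1 - Cmod z0) / 4) z -> inD z /\ Cmod z <= rho).
  { intros z [H1 H2]. change (Rabs (fst z - fst z0) < (1 - Cmod z0) / 4) in H1.
    change (Rabs (snd z - snd z0) < (1 - Cmod z0) / 4) in H2.
    assert (H := Cmod_near z0 z). unfold inD, rho. split; lra. }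
  split. lra. split. exact Hrho. split. exact HE. split. exact Near.
  intros k z Hk Hz. destruct (Near z Hz) as [HzD Hzr].
  assert (HWk := HK k Hk).
  assert (HWk1 : Wb rho (N k) <= 1) by (assert (Rmin r0 1 <= 1) by apply Rmin_r; lra).
  assert (Hp : Cmod (Cpow z (N k)) < r0).
  { rewrite Cmod_pow. assert (Cmod z ^ N k <= rho ^ N k) by (apply pow_incr; split; auto; apply Cmod_ge_0).
    assert (rho ^ N k <= Wb rho (N k)) by (apply pow_le_Wb; auto; lra).
    assert (Rmin r0 1 <= r0) by apply Rmin_l. lra. }
  destruct (HEb _ Hp) as [e1 [e2 [e3 [e4 [e5 e6]]]]].
  apply (G_bounds h B E (c k) (N k) z rho); auto; try lra.
  apply inD_pow; auto.
Qed.

Definition SF (F : nat -> C -> R) (z : C) : R := Series (fun k => F k z).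

Definition LocBnd (F : nat -> C -> R) : Prop := forall z, inD z -> exists d K M, 0 < d /\ ex_series M /\
  (forall k, 0 <= M k) /\
  (forall w, ball z d w -> inD w) /\ forall k w, (K <= k)%nat -> ball z d w -> Rabs (F k w) <= M k.

Lemma LocBnd2 (Fa Fb : nat -> C -> R) : LocBnd Fa -> LocBnd Fb -> forall z, inD z ->
  exists d K M, 0 < d /\ ex_series M /\
  (forall w, ball z d w -> inD w) /\ forall k w, (K <= k)%nat -> ball z d w ->
     Rabs (Fa k w) <= M k /\ Rabs (Fb k w) <= M k.
Proof.
  intros Ha Hb z Hz.
  destruct (Ha z Hz) as [d1 [K1 [M1 [Hd1 [E1 [P1 [D1 B1]]]]]]].
  destruct (Hb z Hz) as [d2 [K2 [M2 [Hd2 [E2 [P2 [D2 B2]]]]]]].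
  exists (Rmin d1 d2), (max K1 K2), (fun k => M1 k + M2 k).
  split. apply Rmin_pos; auto. split.
  { apply (ex_series_plus M1 M2); auto. }
  split. { intros w Hw. apply D1. eapply ball_le; [apply Rmin_l|exact Hw]. }
  intros k w Hk Hw.
  assert (W1 : ball z d1 w) by (eapply ball_le; [apply Rmin_l|exact Hw]).
  assert (W2 : ball z d2 w) by (eapply ball_le; [apply Rmin_r|exact Hw]).
  specialize (B1 k w ltac:(lia) W1). specialize (B2 k w ltac:(lia) W2).
  specialize (P1 k). specialize (P2 k).
  split; lra.
Qed.

Lemma ser_ex (F : nat -> C -> R) : LocBnd F -> forall z, inD z -> ex_series (fun k => F k z).
Proof.
  intros H z Hz. destruct (H z Hz) as [d [K [M [Hd [E [P [D B]]]]]]].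
  apply (ex_series_ev _ M K); auto. intros k Hk. apply B; auto. apply (ball_center z (mkposreal d Hd)).
Qed.

Lemma ser_cont (F : nat -> C -> R) : LocBnd F -> (forall k z, inD z -> continuous (F k) z) ->
  forall z, inD z -> continuous (SF F) z.
Proof.
  intros H Hc z Hz. destruct (H z Hz) as [d [K [M [Hd [E [P [D B]]]]]]].
  apply (series_cont F z d M K); auto.
Qed.

Lemma ser_dx (Fa Fb : nat -> C -> R) : LocBnd Fa -> LocBnd Fb ->
  (forall k z, inD z -> is_derive (fun t => Fa k (t, snd z)) (fst z) (Fb k z)) ->
  forall z, inD z -> is_derive (fun t => SF Fa (t, snd z)) (fst z) (SF Fb z).
Proof.
  intros Ha Hb Hd z Hz.
  destruct (LocBnd2 Fa Fb Ha Hb z Hz) as [d [K [M [Hd0 [E [D B]]]]]].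
  destruct z as [x y]. simpl. unfold SF.
  assert (Bt : forall t, Rabs (t - x) < d -> ball (x, y) d (t, y)).
  { intros t Ht. split. exact Ht. change (Rabs (y - y) < d). rewrite Rminus_eq_0, Rabs_R0. lra. }
  apply (series_derive (fun k t => Fa k (t, y)) (fun k t => Fb k (t, y)) x d M K); auto.
  - intros k t Ht. apply (Hd k (t, y)). apply D. auto.
  - intros k t Hk Ht. apply B; auto.
  - intros t Ht. apply (ex_series_ev _ M K); auto. intros k Hk. apply B; auto.
Qed.

Lemma ser_dy (Fa Fb : nat -> C -> R) : LocBnd Fa -> LocBnd Fb ->
  (forall k z, inD z -> is_derive (fun t => Fa k (fst z, t)) (snd z) (Fb k z)) ->
  forall z, inD z -> is_derive (fun t => SF Fa (fst z, t)) (snd z) (SF Fb z).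
Proof.
  intros Ha Hb Hd z Hz.
  destruct (LocBnd2 Fa Fb Ha Hb z Hz) as [d [K [M [Hd0 [E [D B]]]]]].
  destruct z as [x y]. simpl. unfold SF.
  assert (Bt : forall t, Rabs (t - y) < d -> ball (x, y) d (x, t)).
  { intros t Ht. split. change (Rabs (x - x) < d). rewrite Rminus_eq_0, Rabs_R0. lra. exact Ht. }
  apply (series_derive (fun k t => Fa k (x, t)) (fun k t => Fb k (x, t)) y d M K); auto.
  - intros k t Ht. apply (Hd k (x, t)). apply D. auto.
  - intros k t Hk Ht. apply B; auto.
  - intros t Ht. apply (ex_series_ev _ M K); auto. intros k Hk. apply B; auto.
Qed.

Lemma locD_C (z : C) (P : C -> Prop) : inD z -> (forall w, inD w -> P w) -> locally z P.
Proof.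
  intros Hz H. destruct (open_D z Hz) as [d [Hd Ho]].
  exists (mkposreal d Hd). intros w [H1 H2]. apply H. destruct w as [u v]. apply Ho; auto.
Qed.

Lemma locD_x (x y : R) (P : R -> Prop) : inD (x, y) -> (forall t, inD (t, y) -> P t) -> locally x P.
Proof.
  intros Hz H. destruct (open_D (x, y) Hz) as [d [Hd Ho]].
  exists (mkposreal d Hd). intros t Ht. apply H. apply Ho. exact Ht. simpl. rewrite Rminus_eq_0, Rabs_R0. exact Hd.
Qed.

Lemma locD_y (x y : R) (P : R -> Prop) : inD (x, y) -> (forall t, inD (x, t) -> P t) -> locally y P.
Proof.
  intros Hz H. destruct (open_D (x, y) Hz) as [d [Hd Ho]].
  exists (mkposreal d Hd). intros t Ht. apply H. apply Ho. simpl. rewrite Rminus_eq_0, Rabs_R0. exact Hd. exact Ht.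
Qed.

Lemma harmonic_from_series (F0 F1 F2 F11 F12 F21 F22 : nat -> C -> R) :
  LocBnd F0 -> LocBnd F1 -> LocBnd F2 -> LocBnd F11 -> LocBnd F12 -> LocBnd F21 -> LocBnd F22 ->
  (forall k z, inD z -> is_derive (fun t => F0 k (t, snd z)) (fst z) (F1 k z)) ->
  (forall k z, inD z -> is_derive (fun t => F0 k (fst z, t)) (snd z) (F2 k z)) ->
  (forall k z, inD z -> is_derive (fun t => F1 k (t, snd z)) (fst z) (F11 k z)) ->
  (forall k z, inD z -> is_derive (fun t => F1 k (fst z, t)) (snd z) (F12 k z)) ->
  (forall k z, inD z -> is_derive (fun t => F2 k (t, snd z)) (fst z) (F21 k z)) ->
  (forall k z, inD z -> is_derive (fun t => F2 k (fst z, t)) (snd z) (F22 k z)) ->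
  (forall k z, inD z -> continuous (F0 k) z) -> (forall k z, inD z -> continuous (F1 k) z) ->
  (forall k z, inD z -> continuous (F2 k) z) -> (forall k z, inD z -> continuous (F11 k) z) ->
  (forall k z, inD z -> continuous (F12 k) z) -> (forall k z, inD z -> continuous (F21 k) z) ->
  (forall k z, inD z -> continuous (F22 k) z) ->
  (forall k z, inD z -> F11 k z + F22 k z = 0) ->
  harmonic_on_D (SF F0).
Proof.
  intros L0 L1 L2 L11 L12 L21 L22 D01 D02 D11 D12 D21 D22 C0 C1 C2 C11 C12 C21 C22 Lap.
  set (U := SF F0).
  assert (DX : forall z, inD z -> dx U z = SF F1 z).
  { intros z Hz. unfold dx. apply is_derive_unique. apply ser_dx; auto. }
  assert (DY : forall z, inD z -> dy U z = SF F2 z).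
  { intros z Hz. unfold dy. apply is_derive_unique. apply ser_dy; auto. }
  assert (DXX : forall z, inD z -> is_derive (fun t => dx U (t, snd z)) (fst z) (SF F11 z)).
  { intros z Hz. apply (is_derive_ext_loc (fun t => SF F1 (t, snd z))).
    - destruct z as [x y]. apply (locD_x x y); auto. intros t Ht. simpl. rewrite DX; auto.
    - apply ser_dx; auto. }
  assert (DXY : forall z, inD z -> is_derive (fun t => dx U (fst z, t)) (snd z) (SF F12 z)).
  { intros z Hz. apply (is_derive_ext_loc (fun t => SF F1 (fst z, t))).
    - destruct z as [x y]. apply (locD_y x y); auto. intros t Ht. simpl. rewrite DX; auto.
    - apply ser_dy; auto. }
  assert (DYX : forall z, inD z -> is_derive (fun t => dy U (t, snd z)) (fst z) (SF F21 z)).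
  { intros z Hz. apply (is_derive_ext_loc (fun t => SF F2 (t, snd z))).
    - destruct z as [x y]. apply (locD_x x y); auto. intros t Ht. simpl. rewrite DY; auto.
    - apply ser_dx; auto. }
  assert (DYY : forall z, inD z -> is_derive (fun t => dy U (fst z, t)) (snd z) (SF F22 z)).
  { intros z Hz. apply (is_derive_ext_loc (fun t => SF F2 (fst z, t))).
    - destruct z as [x y]. apply (locD_y x y); auto. intros t Ht. simpl. rewrite DY; auto.
    - apply ser_dy; auto. }
  assert (EXX : forall z, inD z -> dx (dx U) z = SF F11 z) by (intros; unfold dx at 1; apply is_derive_unique; auto).
  assert (EXY : forall z, inD z -> dy (dx U) z = SF F12 z) by (intros; unfold dy at 1; apply is_derive_unique; auto).
  assert (EYX : forall z, inD z -> dx (dy U) z = SF F21 z) by (intros; unfold dx at 1; apply is_derive_unique; auto).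
  assert (EYY : forall z, inD z -> dy (dy U) z = SF F22 z) by (intros; unfold dy at 1; apply is_derive_unique; auto).
  intros z Hz. split.
  - unfold C2_at. repeat split.
    + exists (SF F1 z). apply ser_dx; auto.
    + exists (SF F2 z). apply ser_dy; auto.
    + exists (SF F11 z). apply DXX; auto.
    + exists (SF F12 z). apply DXY; auto.
    + exists (SF F21 z). apply DYX; auto.
    + exists (SF F22 z). apply DYY; auto.
    + apply ser_cont; auto.
    + apply (continuous_ext_loc _ (SF F1)). { apply locD_C; auto. intros w Hw. symmetry. apply DX; auto. } apply ser_cont; auto.
    + apply (continuous_ext_loc _ (SF F2)). { apply locD_C; auto. intros w Hw. symmetry. apply DY; auto. } apply ser_cont; auto.
    + apply (continuous_ext_loc _ (SF F11)). { apply locD_C; auto. intros w Hw. symmetry. apply EXX; auto. } apply ser_cont; auto.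
    + apply (continuous_ext_loc _ (SF F12)). { apply locD_C; auto. intros w Hw. symmetry. apply EXY; auto. } apply ser_cont; auto.
    + apply (continuous_ext_loc _ (SF F21)). { apply locD_C; auto. intros w Hw. symmetry. apply EYX; auto. } apply ser_cont; auto.
    + apply (continuous_ext_loc _ (SF F22)). { apply locD_C; auto. intros w Hw. symmetry. apply EYY; auto. } apply ser_cont; auto.
  - rewrite EXX, EYY by auto. unfold SF.
    rewrite <- Series_plus by (apply ser_ex; auto).
    rewrite (Series_ext _ (fun _ => 0)) by (intros; apply Lap; auto).
    rewrite (Series_ext (fun _ => 0) (fun _ => 0 * 1)) by (intros; ring).
    rewrite Series_scal_l. ring.
Qed.

Lemma LB_of h B (c : nat -> R) (N : nat -> nat) (F : nat -> C -> R) :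
  harmonic_on_D h -> 0 <= B -> (forall w, inD w -> Rabs (h w) <= B * Cmod w) ->
  (forall k, (1 <= N k)%nat) ->
  (forall rho, 0 <= rho < 1 -> ex_series (fun k => Rabs (c k) * Wb rho (N k))) ->
  (forall rho, 0 <= rho < 1 -> forall eps, 0 < eps -> exists K, forall k, (K <= k)%nat -> Wb rho (N k) < eps) ->
  (forall k z M, Gbnds h (c k) (N k) z M -> Rabs (F k z) <= M) ->
  LocBnd F.
Proof.
  intros Hh HB Hg HN HS HW HF z Hz.
  destruct (local_bounds h B c N Hh HB Hg HN HW z Hz) as [d [rho [E [K [Hd [Hr [HE [Hnear Hb]]]]]]]].
  exists d, K, (fun k => Rabs (c k) * Wb rho (N k) * (B + 6 * E)).
  split; auto. split.
  { apply (ex_series_scal_r (B + 6 * E) (fun k => Rabs (c k) * Wb rho (N k))). apply HS; auto. }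
  split.
  { intros k. apply Rmult_le_pos; [apply Rmult_le_pos|lra]. apply Rabs_pos.
    unfold Wb. apply Rmult_le_pos. apply pow2_ge_0. apply pow_le; lra. }
  split. { intros w Hw. apply Hnear; auto. }
  intros k w Hk Hw. apply HF.
  replace (Rabs (c k) * Wb rho (N k) * (B + 6 * E)) with (Rabs (c k) * (B + 6 * E) * Wb rho (N k)) by ring.
  apply Hb; auto.
Qed.

Theorem series_harmonic h B (c : nat -> R) (N : nat -> nat) :
  harmonic_on_D h -> 0 <= B -> (forall w, inD w -> Rabs (h w) <= B * Cmod w) ->
  (forall k, (1 <= N k)%nat) ->
  (forall rho, 0 <= rho < 1 -> ex_series (fun k => Rabs (c k) * Wb rho (N k))) ->
  (forall rho, 0 <= rho < 1 -> forall eps, 0 < eps -> exists K, forall k, (K <= k)%nat -> Wb rho (N k) < eps) ->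
  harmonic_on_D (SF (fun k => G0 h (c k) (N k))).
Proof.
  intros Hh HB Hg HN HS HW.
  apply (harmonic_from_series _ (fun k => G1 h (c k) (N k)) (fun k => G2 h (c k) (N k))
           (fun k => G11 h (c k) (N k)) (fun k => G12 h (c k) (N k))
           (fun k => G21 h (c k) (N k)) (fun k => G22 h (c k) (N k)));
  try (apply (LB_of h B c N); auto; intros k z M HM; unfold Gbnds in HM; tauto);
  try (intros k [x y] Hz; simpl).
  - apply G0_dx; auto.
  - apply G0_dy; auto.
  - apply G1_dx; auto.
  - apply G1_dy; auto.
  - apply G2_dx; auto.
  - apply G2_dy; auto.
  - apply (G_conts h (c k) (N k) (x, y) Hh (HN k) Hz).
  - apply (G_conts h (c k) (N k) (x, y) Hh (HN k) Hz).
  - apply (G_conts h (c k) (N k) (x, y) Hh (HN k) Hz).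
  - apply (G_conts h (c k) (N k) (x, y) Hh (HN k) Hz).
  - apply (G_conts h (c k) (N k) (x, y) Hh (HN k) Hz).
  - apply (G_conts h (c k) (N k) (x, y) Hh (HN k) Hz).
  - apply (G_conts h (c k) (N k) (x, y) Hh (HN k) Hz).
  - apply G_lap; auto.
Qed.

Lemma n_pow_le (s : R) (n : nat) : 0 <= s < 1 -> INR n * s ^ n <= 1 / (1 - s).
Proof.
  intros Hs.
  assert (H : forall n, INR n * s ^ n * (1 - s) <= 1 - s ^ n).
  { induction n0 as [|m IH].
    - simpl. lra.
    - rewrite S_INR. simpl.
      assert (0 <= s ^ m) by (apply pow_le; lra).
      assert (s ^ m <= 1) by (rewrite <- (pow1 m); apply pow_incr; lra).
      assert (A1 : s * (INR m * s ^ m * (1 - s)) <= s * (1 - s ^ m)) by (apply Rmult_le_compat_l; lra).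
      assert (A2 : 0 <= (1 - s) * (1 - s * s ^ m)) by (apply Rmult_le_pos; nra).
      lra. }
  specialize (H n).
  assert (0 <= s ^ n) by (apply pow_le; lra).
  apply (Rmult_le_reg_r (1 - s)). lra.
  replace (1 / (1 - s) * (1 - s)) with 1 by (field; lra). lra.
Qed.

Lemma bern4 (a : R) : 0 <= a <= 1 -> 1 - 4 * a <= (1 - a) ^ 4.
Proof. intros. simpl. nra. Qed.

Lemma cube_bound (rho : R) : 0 <= rho < 1 -> exists C s, 0 <= s < 1 /\ 0 <= C /\
  forall n : nat, (2 <= n)%nat -> INR n ^ 3 * rho ^ (n - 2) <= C * s ^ n.
Proof.
  intros Hr. set (s := 1 - (1 - rho) / 4).
  assert (Hs : 3/4 <= s < 1) by (unfold s; lra).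
  assert (H4 : rho <= s ^ 4) by (unfold s; pose proof (bern4 ((1 - rho)/4)); lra).
  set (K := 1 / (1 - s)).
  assert (HK : 0 <= K) by (unfold K; apply Rlt_le; apply Rdiv_lt_0_compat; lra).
  exists (K ^ 3 / s ^ 8), s. split. lra. split.
  { apply Rmult_le_pos. apply pow_le; auto. apply Rlt_le, Rinv_0_lt_compat, pow_lt; lra. }
  intros n Hn.
  assert (B := n_pow_le s n ltac:(lra)). fold K in B.
  assert (P0 : 0 <= INR n * s ^ n) by (apply Rmult_le_pos; [apply pos_INR|apply pow_le; lra]).
  assert (Hpow : rho ^ (n - 2) <= (s ^ 4) ^ (n - 2)) by (apply pow_incr; lra).
  rewrite <- pow_mult in Hpow.
  assert (E : s ^ (4 * (n - 2)) * s ^ 8 = s ^ n * s ^ n * s ^ n * s ^ n).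
  { rewrite <- pow_add. rewrite <- !pow_add. f_equal. lia. }
  assert (Hs8 : 0 < s ^ 8) by (apply pow_lt; lra).
  assert (Hsn : 0 <= s ^ n) by (apply pow_le; lra).
  assert (Hn0 : 0 <= INR n) by apply pos_INR.
  assert (C3 : (INR n * s ^ n) ^ 3 <= K ^ 3) by (apply pow_incr; lra).
  apply (Rmult_le_reg_r (s ^ 8)); auto.
  replace (K ^ 3 / s ^ 8 * s ^ n * s ^ 8) with (K ^ 3 * s ^ n) by (field; lra).
  assert (INR n ^ 3 * rho ^ (n - 2) * s ^ 8 <= INR n ^ 3 * (s ^ (4 * (n - 2)) * s ^ 8)).
  { rewrite <- Rmult_assoc. apply Rmult_le_compat_r. lra. apply Rmult_le_compat_l. apply pow_le; auto. lra. }
  rewrite E in H.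
  replace (INR n ^ 3 * (s ^ n * s ^ n * s ^ n * s ^ n)) with ((INR n * s ^ n) ^ 3 * s ^ n) in H by ring.
  assert ((INR n * s ^ n) ^ 3 * s ^ n <= K ^ 3 * s ^ n) by (apply Rmult_le_compat_r; auto).
  lra.
Qed.

Lemma Nk_facts (A k : nat) : (2 <= A)%nat -> (k < A ^ k)%nat /\ (A ^ k < 2 ^ (A ^ k))%nat /\ (2 <= 2 ^ (A ^ k))%nat.
Proof.
  intros HA. split. apply Nat.pow_gt_lin_r. lia. split. apply Nat.pow_gt_lin_r. lia.
  assert (1 <= A ^ k)%nat by (assert (H := Nat.pow_gt_lin_r A k ltac:(lia)); lia).
  replace 2%nat with (2 ^ 1)%nat at 1 by reflexivity. apply Nat.pow_le_mono_r; lia.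
Qed.

Lemma HS_inst (A : nat) : (2 <= A)%nat -> forall rho, 0 <= rho < 1 ->
  ex_series (fun k => Rabs (INR (A ^ k)) * Wb rho (2 ^ (A ^ k))).
Proof.
  intros HA rho Hr. destruct (cube_bound rho Hr) as [C [s [Hs [HC Hb]]]].
  apply (ex_series_le (K:=R_AbsRing) (V:=R_CompleteNormedModule) _ (fun k => C * s ^ k)).
  - intros k. change (Rabs (Rabs (INR (A ^ k)) * Wb rho (2 ^ (A ^ k))) <= C * s ^ k).
    destruct (Nk_facts A k HA) as [F1 [F2 F3]].
    set (N := (2 ^ (A ^ k))%nat) in *.
    rewrite Rabs_pos_eq.
    2: { apply Rmult_le_pos. apply Rabs_pos. unfold Wb. apply Rmult_le_pos. apply pow2_ge_0. apply pow_le; lra. }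
    rewrite Rabs_pos_eq by apply pos_INR. unfold Wb.
    assert (L1 : INR (A ^ k) <= INR N) by (apply le_INR; lia).
    assert (L2 : 0 <= INR N ^ 2 * rho ^ (N - 2)) by (apply Rmult_le_pos; [apply pow2_ge_0|apply pow_le; lra]).
    assert (L3 : INR (A ^ k) * (INR N ^ 2 * rho ^ (N - 2)) <= INR N ^ 3 * rho ^ (N - 2)).
    { replace (INR N ^ 3 * rho ^ (N - 2)) with (INR N * (INR N ^ 2 * rho ^ (N - 2))) by ring.
      apply Rmult_le_compat_r; auto. }
    assert (L4 := Hb N F3).
    assert (L5 : s ^ N <= s ^ k) by (apply pow_le_pow_dec; lra || lia).
    assert (L6 : C * s ^ N <= C * s ^ k) by (apply Rmult_le_compat_l; auto).
    lra.
  - apply (ex_series_scal_l (V:=R_NormedModule) C (fun k => s ^ k)). apply ex_series_geom.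
    rewrite Rabs_pos_eq; lra.
Qed.

Lemma HW_inst (A : nat) : (2 <= A)%nat -> forall rho, 0 <= rho < 1 -> forall eps, 0 < eps ->
  exists K, forall k, (K <= k)%nat -> Wb rho (2 ^ (A ^ k)) < eps.
Proof.
  intros HA rho Hr eps He.
  assert (L := ex_series_lim_0 _ (HS_inst A HA rho Hr)).
  apply is_lim_seq_spec in L. destruct (L (mkposreal eps He)) as [K HK].
  exists K. intros k Hk. specialize (HK k Hk). simpl in HK.
  rewrite Rminus_0_r in HK.
  assert (W0 : 0 <= Wb rho (2 ^ (A ^ k))) by (unfold Wb; apply Rmult_le_pos; [apply pow2_ge_0|apply pow_le; lra]).
  assert (C1 : 1 <= Rabs (INR (A ^ k))).
  { rewrite Rabs_pos_eq by apply pos_INR. apply (le_INR 1). destruct (Nk_facts A k HA). lia. }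
  rewrite Rabs_pos_eq in HK by (apply Rmult_le_pos; [apply Rabs_pos|auto]).
  nra.
Qed.

Lemma ln2_pos : 0 < ln 2.
Proof. rewrite <- ln_1. apply ln_increasing; lra. Qed.

Lemma exp_pow_nat (a : R) (M : nat) : exp a ^ M = exp (a * INR M).
Proof.
  induction M as [|M IH]. simpl. rewrite Rmult_0_r, exp_0. reflexivity.
  rewrite S_INR. simpl. rewrite IH, <- exp_plus. f_equal. ring.
Qed.

Lemma y_le_exp (y : R) : y <= exp y.
Proof. pose proof (exp_ineq1_le y). lra. Qed.

Lemma y2_le_exp (y : R) : 0 <= y -> y ^ 2 <= 4 * exp y.
Proof.
  intros Hy. replace y with (y/2 + y/2) at 2 by field. rewrite exp_plus.
  pose proof (exp_ineq1_le (y/2)). nra.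
Qed.

Lemma ln_le_id (y : R) : 0 < y -> ln y <= y.
Proof. intros Hy. pose proof (exp_ineq1_le (ln y)). rewrite exp_ln in H by exact Hy. lra. Qed.

Lemma ln_le_mono (x y : R) : 0 < x -> x <= y -> ln x <= ln y.
Proof. intros Hx Hxy. destruct (Req_dec x y) as [->|N]. lra. left. apply ln_increasing; lra. Qed.


Definition ycoef (t : R) (A k : nat) : R := t * 2 ^ (A ^ k).

Lemma ycoef_step (t : R) (A k : nat) : 0 < t -> (2 <= A)%nat -> 2 * ycoef t A k <= ycoef t A (S k).
Proof.
  intros Ht HA. unfold ycoef.
  assert (H : (A ^ k + 1 <= A ^ S k)%nat).
  { simpl. assert (1 <= A ^ k)%nat by (assert (Hh := Nat.pow_gt_lin_r A k ltac:(lia)); lia). nia. }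
  replace (A ^ S k)%nat with ((A ^ k + 1) + (A ^ S k - (A ^ k + 1)))%nat by lia.
  rewrite !pow_add.
  assert (1 <= 2 ^ (A ^ S k - (A ^ k + 1))) by (apply pow_R1_Rle; lra).
  assert (0 < 2 ^ (A ^ k)) by (apply pow_lt; lra).
  replace (2 ^ 1) with 2 by ring.
  assert (0 < t * 2 ^ (A ^ k)) by (apply Rmult_lt_0_compat; lra).
  replace (t * (2 ^ A ^ k * 2 * 2 ^ (A ^ S k - (A ^ k + 1)))) with
    ((2 * (t * 2 ^ A ^ k)) * 2 ^ (A ^ S k - (A ^ k + 1))) by ring.
  nra.
Qed.

Lemma ycoef_pos t A k : 0 < t -> 0 < ycoef t A k.
Proof. intros. unfold ycoef. apply Rmult_lt_0_compat; auto. apply pow_lt; lra. Qed.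

Lemma INR_Apow_step (A n : nat) : (2 <= A)%nat -> 2 * INR (A ^ n) <= INR (A ^ S n).
Proof.
  intros HA. rewrite !pow_INR. simpl. assert (2 <= INR A) by (apply (le_INR 2); lia).
  assert (0 <= INR A ^ n) by (apply pow_le; lra). nra.
Qed.

Lemma small_sum (t L : R) (A : nat) : 0 < t -> (2 <= A)%nat -> 0 <= L ->
  (forall k, ycoef t A k <= 1 -> INR (A ^ k) <= L) ->
  forall n, sum_f_R0 (fun k => if Rle_dec (ycoef t A k) 1 then INR (A ^ k) else 0) n <= 2 * L /\
            sum_f_R0 (fun k => if Rle_dec (ycoef t A k) 1 then INR (A ^ k) else 0) n <= 2 * INR (A ^ n).
Proof.
  intros Ht HA HL0 HL n. induction n as [|n [IH1 IH2]].
  - simpl. destruct (Rle_dec (ycoef t A 0) 1) as [Hc|Hc].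
    + specialize (HL 0%nat Hc). simpl in *. split; lra.
    + simpl. split; lra.
  - rewrite tech5. assert (St := INR_Apow_step A n HA).
    assert (P : 0 <= INR (A ^ n)) by apply pos_INR.
    destruct (Rle_dec (ycoef t A (S n)) 1) as [Hc|Hc].
    + specialize (HL (S n) Hc). split; lra.
    + split; lra.
Qed.

Lemma large_sum (t : R) (A : nat) : 0 < t -> (2 <= A)%nat ->
  forall n, (ycoef t A n <= 1 -> sum_f_R0 (fun k => if Rle_dec (ycoef t A k) 1 then 0 else / ycoef t A k) n = 0) /\
            (1 < ycoef t A n -> sum_f_R0 (fun k => if Rle_dec (ycoef t A k) 1 then 0 else / ycoef t A k) n <= 2 - / ycoef t A n).
Proof.
  intros Ht HA n. induction n as [|n [IH1 IH2]].
  - simpl. split; intros Hc.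
    + destruct (Rle_dec (ycoef t A 0) 1); [reflexivity|lra].
    + destruct (Rle_dec (ycoef t A 0) 1); [lra|].
      assert (/ ycoef t A 0 < 1) by (rewrite <- Rinv_1; apply Rinv_lt_contravar; lra). lra.
  - assert (Hs := ycoef_step t A n Ht HA). assert (Hp := ycoef_pos t A n Ht).
    assert (Hp' := ycoef_pos t A (S n) Ht).
    rewrite tech5. split; intros Hc.
    + rewrite IH1 by lra. destruct (Rle_dec (ycoef t A (S n)) 1); [ring|lra].
    + destruct (Rle_dec (ycoef t A (S n)) 1) as [X|X]; [lra|].
      destruct (Rle_dec (ycoef t A n) 1) as [Y|Y].
      * rewrite IH1 by exact Y.
        assert (/ ycoef t A (S n) < 1) by (rewrite <- Rinv_1; apply Rinv_lt_contravar; lra). lra.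
      * assert (IH := IH2 ltac:(lra)).
        assert (2 / ycoef t A (S n) <= / ycoef t A n).
        { unfold Rdiv. apply (Rmult_le_reg_r (ycoef t A n * ycoef t A (S n))). nra.
          field_simplify; try lra. }
        unfold Rdiv in H. lra.
Qed.

Definition Lt (t : R) : R := - ln t / ln 2.

Lemma Lt_nonneg (t : R) : 0 < t <= 1 -> 0 <= Lt t.
Proof.
  intros Ht. unfold Lt. assert (ln t <= 0) by (rewrite <- ln_1; apply ln_le_mono; lra).
  assert (H2 := ln2_pos). unfold Rdiv. apply Rmult_le_pos. lra. left; apply Rinv_0_lt_compat; lra.
Qed.

Lemma ln_ycoef (t : R) (A k : nat) : 0 < t -> ln (ycoef t A k) = ln t + INR (A ^ k) * ln 2.
Proof.
  intros Ht. unfold ycoef. rewrite ln_mult; auto. rewrite ln_pow by lra. reflexivity. apply pow_lt; lra.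
Qed.

Lemma small_cond (t : R) (A k : nat) : 0 < t -> ycoef t A k <= 1 -> INR (A ^ k) <= Lt t.
Proof.
  intros Ht Hy. assert (H := ln_le_mono _ _ (ycoef_pos t A k Ht) Hy). rewrite ln_1, ln_ycoef in H by auto.
  unfold Lt. assert (H2 := ln2_pos). apply (Rmult_le_reg_r (ln 2)); auto.
  unfold Rdiv. rewrite Rmult_assoc, Rinv_l by lra. lra.
Qed.

Lemma term_pt (t : R) (A k : nat) : 0 < t <= 1 -> (2 <= A)%nat ->
  INR (A ^ k) * exp (- ycoef t A k) <=
  (if Rle_dec (ycoef t A k) 1 then INR (A ^ k) else 0) +
  (Lt t + 4 / ln 2) * (if Rle_dec (ycoef t A k) 1 then 0 else / ycoef t A k).
Proof.
  intros Ht HA. assert (Hy := ycoef_pos t A k ltac:(lra)).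
  assert (Hs : 0 <= INR (A ^ k)) by apply pos_INR.
  destruct (Rle_dec (ycoef t A k) 1) as [C|C].
  - assert (exp (- ycoef t A k) <= 1). { rewrite <- exp_0. left. apply exp_increasing. lra. }
    assert (INR (A ^ k) * exp (- ycoef t A k) <= INR (A ^ k) * 1) by (apply Rmult_le_compat_l; auto).
    lra.
  - set (y := ycoef t A k) in *.
    assert (Hl2 := ln2_pos). assert (HL := Lt_nonneg t Ht).
    assert (Es : INR (A ^ k) = ln y / ln 2 + Lt t).
    { unfold y. rewrite ln_ycoef by lra. unfold Lt. field. lra. }
    assert (Hey : 0 < exp y) by apply exp_pos.
    rewrite exp_Ropp.
    assert (Hye : y <= exp y) by apply y_le_exp.
    assert (Hy2 : y ^ 2 <= 4 * exp y) by (apply y2_le_exp; lra).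
    assert (Hln : 0 <= ln y) by (rewrite <- ln_1; apply ln_le_mono; lra).
    assert (Hlny : ln y <= y) by (apply ln_le_id; lra).
    rewrite Rplus_0_l.
    apply (Rmult_le_reg_r (y * exp y)). nra.
    replace (INR (A ^ k) * / exp y * (y * exp y)) with (INR (A ^ k) * y) by (field; lra).
    replace ((Lt t + 4 / ln 2) * / y * (y * exp y)) with ((Lt t + 4 / ln 2) * exp y) by (field; lra).
    rewrite Es.
    assert (A1 : Lt t * y <= Lt t * exp y) by (apply Rmult_le_compat_l; auto).
    assert (A2 : ln y * y <= 4 * exp y) by (simpl in Hy2; nra).
    assert (A3 : ln y / ln 2 * y <= 4 / ln 2 * exp y).
    { unfold Rdiv. replace (ln y * / ln 2 * y) with ((ln y * y) * / ln 2) by ring.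
      replace (4 * / ln 2 * exp y) with ((4 * exp y) * / ln 2) by ring.
      apply Rmult_le_compat_r. left; apply Rinv_0_lt_compat; lra. exact A2. }
    lra.
Qed.

Lemma sum_bound (t : R) (A : nat) : 0 < t <= 1 -> (2 <= A)%nat -> forall n,
  sum_f_R0 (fun k => INR (A ^ k) * exp (- ycoef t A k)) n <= 4 * Lt t + 8 / ln 2.
Proof.
  intros Ht HA n.
  eapply Rle_trans. apply sum_Rle. intros k _. apply (term_pt t A k Ht HA).
  rewrite plus_sum.
  rewrite (sum_eq (fun i => (Lt t + 4 / ln 2) * _) (fun i => (if Rle_dec (ycoef t A i) 1 then 0 else / ycoef t A i) * (Lt t + 4 / ln 2))) by (intros; ring).
  rewrite <- scal_sum.
  destruct (small_sum t (Lt t) A ltac:(lra) HA (Lt_nonneg t Ht) (fun k => small_cond t A k ltac:(lra)) n) as [S1 _].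
  destruct (large_sum t A ltac:(lra) HA n) as [L1 L2].
  assert (S2 : sum_f_R0 (fun k => if Rle_dec (ycoef t A k) 1 then 0 else / ycoef t A k) n <= 2).
  { destruct (Rle_dec (ycoef t A n) 1) as [X|X]. rewrite L1; auto; lra.
    assert (0 < / ycoef t A n) by (apply Rinv_0_lt_compat; apply ycoef_pos; lra).
    specialize (L2 ltac:(lra)). lra. }
  assert (Hl2 := ln2_pos). assert (HL := Lt_nonneg t Ht).
  assert (0 <= Lt t + 4 / ln 2) by (assert (0 < 4 / ln 2) by (apply Rdiv_lt_0_compat; lra); lra).
  assert (S3 : 0 <= sum_f_R0 (fun k => if Rle_dec (ycoef t A k) 1 then 0 else / ycoef t A k) n).
  { apply cond_pos_sum. intros k. destruct (Rle_dec (ycoef t A k) 1). lra.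
    left. apply Rinv_0_lt_compat. apply ycoef_pos; lra. }
  assert ((Lt t + 4 / ln 2) * sum_f_R0 (fun k => if Rle_dec (ycoef t A k) 1 then 0 else / ycoef t A k) n <= (Lt t + 4 / ln 2) * 2)
    by (apply Rmult_le_compat_l; auto).
  lra.
Qed.

Lemma series_le_bound (b : nat -> R) (X : R) : ex_series b -> (forall n, sum_f_R0 b n <= X) -> Series b <= X.
Proof.
  intros Hb HX. assert (H := Series_correct _ Hb).
  assert (L : is_lim_seq (sum_n b) (Series b)) by exact H.
  assert (Le := is_lim_seq_le (sum_n b) (fun _ => X) (Series b) X).
  simpl in Le. apply Le; auto. intros n. rewrite sum_n_Reals. apply HX. apply is_lim_seq_const.
Qed.

Lemma growth_bound (h : C -> R) (B : R) (A : nat) : 0 <= B -> (2 <= A)%nat ->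
  (forall w, inD w -> Rabs (h w) <= B * Cmod w) ->
  (forall z, inD z -> ex_series (fun k => Rabs (INR (A ^ k) * h (Cpow z (2 ^ (A ^ k)))))) ->
  exists Cst, forall z, inD z ->
    Series (fun k => INR (A ^ k) * h (Cpow z (2 ^ (A ^ k)))) <= Cst * ln (exp 1 / (1 - Cmod z)).
Proof.
  intros HB HA Hg Hex. assert (Hl2 := ln2_pos).
  exists (8 * B / ln 2). intros z Hz.
  set (t := 1 - Cmod z).
  assert (Ht : 0 < t <= 1) by (unfold t; unfold inD in Hz; pose proof (Cmod_ge_0 z); lra).
  assert (Tb : forall k, Rabs (INR (A ^ k) * h (Cpow z (2 ^ (A ^ k)))) <= B * (INR (A ^ k) * exp (- ycoef t A k))).
  { intros k. destruct (Nk_facts A k HA) as [_ [_ F3]].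
    rewrite Rabs_mult, (Rabs_pos_eq (INR _)) by apply pos_INR.
    assert (Hh := Hg _ (inD_pow z (2 ^ (A ^ k)) Hz ltac:(lia))). rewrite Cmod_pow in Hh.
    assert (Hr : Cmod z <= exp (- t)) by (pose proof (exp_ineq1_le (- t)); unfold t in *; lra).
    assert (Hp : Cmod z ^ (2 ^ (A ^ k)) <= exp (- t) ^ (2 ^ (A ^ k))) by (apply pow_incr; split; auto; apply Cmod_ge_0).
    rewrite exp_pow_nat in Hp. rewrite pow_INR in Hp. replace (INR 2) with 2 in Hp by (simpl; ring).
    unfold ycoef. replace (- (t * 2 ^ A ^ k)) with (- t * 2 ^ A ^ k) by ring.
    assert (0 <= INR (A ^ k)) by apply pos_INR.
    assert (Rabs (h (Cpow z (2 ^ (A ^ k)))) <= B * exp (- t * 2 ^ A ^ k)).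
    { eapply Rle_trans. exact Hh. apply Rmult_le_compat_l; auto. }
    nra. }
  assert (Habs := Hex z Hz).
  assert (Hex1 : ex_series (fun k => INR (A ^ k) * h (Cpow z (2 ^ (A ^ k))))) by (apply ex_series_Rabs; exact Habs).
  eapply Rle_trans. apply Rle_abs. eapply Rle_trans. apply Series_Rabs. exact Habs.
  apply Rle_trans with (B * (4 * Lt t + 8 / ln 2)).
  { apply series_le_bound. exact Habs. intros n.
    eapply Rle_trans. apply sum_Rle. intros k _. apply Tb.
    rewrite (sum_eq _ (fun k => (INR (A ^ k) * exp (- ycoef t A k)) * B)) by (intros; ring).
    rewrite <- scal_sum. apply Rmult_le_compat_l; auto. apply sum_bound; auto. }
  assert (Eln : ln (exp 1 / t) = 1 + Lt t * ln 2).
  { unfold Rdiv. rewrite ln_mult, ln_exp, ln_Rinv by (apply exp_pos || apply Rinv_0_lt_compat || idtac; lra).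
    unfold Lt. field. lra. }
  rewrite Eln. assert (HL := Lt_nonneg t Ht).
  assert (E1 : 8 * B / ln 2 * (1 + Lt t * ln 2) = 8 * B / ln 2 + 8 * B * Lt t) by (field; lra).
  rewrite E1.
  assert (E2 : B * (4 * Lt t + 8 / ln 2) = 4 * B * Lt t + 8 * B / ln 2) by (field; lra).
  rewrite E2.
  assert (0 <= B * Lt t) by (apply Rmult_le_pos; auto). lra.
Qed.

Lemma Cmod_polar (r th : R) : 0 <= r -> Cmod (polar r th) = r.
Proof.
  intros Hr. unfold Cmod, polar. simpl fst; simpl snd.
  replace ((r * cos th) ^ 2 + (r * sin th) ^ 2) with (r * r * ((sin th)² + (cos th)²)) by (unfold Rsqr; ring).
  rewrite sin2_cos2, Rmult_1_r. apply sqrt_square. exact Hr.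
Qed.

Lemma Cpow_polar (r th : R) (n : nat) : Cpow (polar r th) n = polar (r ^ n) (INR n * th).
Proof.
  induction n as [|n IH].
  - simpl. unfold polar. rewrite Rmult_0_l, cos_0, sin_0. apply injective_projections; simpl; ring.
  - rewrite Cpow_S, IH. unfold polar. simpl fst; simpl snd. rewrite S_INR.
    replace ((INR n + 1) * th) with (th + INR n * th) by ring.
    rewrite cos_plus, sin_plus. change (r ^ S n) with (r * r ^ n). f_equal; ring.
Qed.

Lemma polar_period (r th : R) (q : nat) : polar r (th + 2 * INR q * PI) = polar r th.
Proof. unfold polar. rewrite cos_period, sin_period. reflexivity. Qed.

Lemma arch_nat (x : R) : exists n : nat, x < INR n.
Proof.
  destruct (nfloor_ex (Rmax x 0) (Rmax_r _ _)) as [n Hn].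
  exists (S n). rewrite S_INR. assert (x <= Rmax x 0) by apply Rmax_l. lra.
Qed.

Lemma geom_sum3 (n : nat) : sum_f_R0 (fun j => (1/3) ^ j) n <= 3/2.
Proof.
  rewrite tech3 by lra.
  assert (0 <= (1/3) ^ S n) by (apply pow_le; lra).
  assert (E : (1 - (1/3) ^ S n) / (1 - 1/3) = 3/2 * (1 - (1/3) ^ S n)) by field.
  rewrite E. lra.
Qed.

Lemma head_sum (A : nat) (m : nat) : (2 <= A)%nat ->
  (INR A - 1) * sum_f_R0 (fun k => INR (A ^ k)) m <= INR (A ^ S m).
Proof.
  intros HA. induction m as [|m IH].
  - change (sum_f_R0 (fun k => INR (A ^ k)) 0) with (INR (A ^ 0)). rewrite !pow_INR, pow_O, pow_1. assert (2 <= INR A) by (apply (le_INR 2); lia). lra.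
  - rewrite tech5. rewrite Rmult_plus_distr_l.
    assert (E : INR (A ^ S (S m)) = INR A * INR (A ^ S m)) by (rewrite !pow_INR; simpl; ring).
    rewrite E. assert (0 <= INR (A ^ S m)) by apply pos_INR. nra.
Qed.

Lemma ln3_ge1 : 1 <= ln 3.
Proof. rewrite <- (ln_exp 1). apply ln_le_mono. apply exp_pos. apply exp_le_3. Qed.

Lemma log_est (rho : R) (Nn : nat) : 1/6 < rho < 1/3 -> 6 <= INR Nn ->
  0 < exp (ln rho / INR Nn) < 1 /\ exp (ln rho / INR Nn) ^ Nn = rho /\
  1 - exp (ln rho / INR Nn) <= 6 / INR Nn /\ 1 / (2 * INR Nn) <= 1 - exp (ln rho / INR Nn).
Proof.
  intros Hr HN.
  assert (HNp : 0 < INR Nn) by lra.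
  assert (L1 : ln rho < - 1).
  { assert (ln rho < ln (1/3)) by (apply ln_increasing; lra).
    unfold Rdiv in H. rewrite Rmult_1_l, ln_Rinv in H by lra. pose proof ln3_ge1. lra. }
  assert (L2 : - ln rho < 6).
  { rewrite <- ln_Rinv by lra. eapply Rle_lt_trans. apply ln_le_id. apply Rinv_0_lt_compat; lra.
    apply (Rmult_lt_reg_r rho). lra. rewrite Rinv_l by lra. lra. }
  set (a := - ln rho / INR Nn).
  assert (Ea : ln rho / INR Nn = - a) by (unfold a; field; lra).
  rewrite Ea.
  assert (Ha1 : 1 / INR Nn <= a).
  { unfold a. apply Rmult_le_compat_r. left; apply Rinv_0_lt_compat; lra. lra. }
  assert (Ha2 : a <= 6 / INR Nn).
  { unfold a. apply Rmult_le_compat_r. left; apply Rinv_0_lt_compat; lra. lra. }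
  assert (Ha3 : a <= 1).
  { eapply Rle_trans. exact Ha2. apply (Rmult_le_reg_r (INR Nn)); auto.
    unfold Rdiv. rewrite Rmult_assoc, Rinv_l by lra. lra. }
  assert (Ha0 : 0 < a). { assert (0 < 1 / INR Nn) by (apply Rdiv_lt_0_compat; lra). lra. }
  split. split. apply exp_pos. rewrite <- exp_0. apply exp_increasing. lra.
  split. rewrite exp_pow_nat. rewrite <- Ea. replace (ln rho / INR Nn * INR Nn) with (ln rho) by (field; lra).
  apply exp_ln. lra.
  split. { pose proof (exp_ineq1_le (- a)). lra. }
  assert (E1 : exp (- a) <= 1 / (1 + a)).
  { rewrite exp_Ropp. pose proof (exp_ineq1_le a). unfold Rdiv. rewrite Rmult_1_l.
    apply Rinv_le_contravar; lra. }
  assert (E2 : 1 / (2 * INR Nn) <= a / 2).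
  { unfold Rdiv. rewrite Rinv_mult. unfold Rdiv in Ha1. lra. }
  assert (E3 : a / 2 <= 1 - 1 / (1 + a)).
  { replace (1 - 1 / (1 + a)) with (a / (1 + a)) by (field; lra).
    apply Rmult_le_compat_l. lra. apply Rinv_le_contravar; lra. }
  lra.
Qed.

Lemma ln2_lt1 : ln 2 < 1.
Proof. rewrite <- (ln_exp 1). apply ln_increasing. lra. pose proof (exp_ineq1 1 ltac:(lra)). lra. Qed.

Lemma tail_term (A m j : nat) (r rho : R) : (3 <= A)%nat -> 0 < r -> r ^ (2 ^ (A ^ m)) = rho -> 0 <= rho <= 1/3 ->
  INR (A ^ (S m + j)) * r ^ (2 ^ (A ^ (S m + j))) <= INR A * (3/2) * (1/3) ^ j.
Proof.
  intros HA Hr Hrho Hrb.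
  set (s := (A ^ (m + j))%nat).
  assert (Ek : (A ^ (S m + j) = A * s)%nat) by (unfold s; simpl; reflexivity).
  assert (Hs1 : (A ^ m <= s)%nat) by (unfold s; apply Nat.pow_le_mono_r; lia).
  assert (Hsj : (j < s)%nat) by (unfold s; assert (H := Nat.pow_gt_lin_r A (m + j) ltac:(lia)); lia).
  set (D := (A * s - A ^ m)%nat).
  assert (HD : (2 * s <= D)%nat) by (unfold D; nia).
  assert (E2 : (2 ^ (A ^ (S m + j)) = 2 ^ (A ^ m) * 2 ^ D)%nat).
  { rewrite <- Nat.pow_add_r. f_equal. rewrite Ek. unfold D. nia. }
  rewrite E2, pow_mult, Hrho, Ek, mult_INR.
  assert (HDs : (2 * s < 2 ^ D)%nat) by (assert (H := Nat.pow_gt_lin_r 2 D ltac:(lia)); lia).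
  assert (P1 : rho ^ (2 ^ D) <= (1/3) ^ (2 ^ D)) by (apply pow_incr; lra).
  assert (P2 : (1/3) ^ (2 ^ D) <= (1/3) ^ (2 * s)) by (apply pow_le_pow_dec; lra || lia).
  rewrite pow_mult in P2. replace ((1/3) ^ 2) with ((1/3) * (1/3)) in P2 by ring.
  rewrite Rpow_mult_distr in P2.
  assert (P3 := n_pow_le (1/3) s ltac:(lra)).
  replace (1 / (1 - 1/3)) with (3/2) in P3 by field.
  assert (P4 : (1/3) ^ s <= (1/3) ^ j) by (apply pow_le_pow_dec; lra || lia).
  assert (Q0 : 0 <= (1/3) ^ s) by (apply pow_le; lra).
  assert (Q1 : 0 <= INR s) by apply pos_INR.
  assert (Q2 : 0 <= INR A) by apply pos_INR.
  assert (Q3 : 0 <= rho ^ (2 ^ D)) by (apply pow_le; lra).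
  assert (R1 : INR s * rho ^ (2 ^ D) <= INR s * (1/3) ^ s * (1/3) ^ s).
  { rewrite Rmult_assoc. apply Rmult_le_compat_l; lra. }
  assert (R2 : INR s * (1/3) ^ s * (1/3) ^ s <= 3/2 * (1/3) ^ j).
  { apply Rmult_le_compat; try lra. apply Rmult_le_pos; lra. }
  replace (INR A * INR s * rho ^ (2 ^ D)) with (INR A * (INR s * rho ^ (2 ^ D))) by ring.
  replace (INR A * (3/2) * (1/3) ^ j) with (INR A * (3/2 * (1/3) ^ j)) by ring.
  apply Rmult_le_compat_l; lra.
Qed.

Lemma lower_bound (h : C -> R) (B : R) (A : nat) :
  0 <= B -> (3 <= A)%nat -> 8 * B <= INR A - 1 ->
  (forall w, inD w -> Rabs (h w) <= B * Cmod w) ->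
  (forall theta, 0 <= theta < 2 * PI -> forall eps, 0 < eps ->
     exists r, 1/6 < r < 1/3 /\ h (polar r theta) > 1 - eps) ->
  (forall z, inD z -> ex_series (fun k => Rabs (INR (A ^ k) * h (Cpow z (2 ^ (A ^ k)))))) ->
  forall theta, 0 <= theta < 2 * PI -> forall delta eps, 0 < delta -> 0 < eps ->
    exists r, 1 - delta < r < 1 /\
      Series (fun k => INR (A ^ k) * h (Cpow (polar r theta) (2 ^ (A ^ k)))) / Rabs (ln (1 - r)) >= 1/4 - eps.
Proof.
  intros HB HA HAB Hg Hsup Hex theta Hth delta eps Hd He.
  assert (HA' : 3 <= INR A) by (assert (X : INR 3 <= INR A) by (apply le_INR; lia); simpl in X; lra).
  destruct (arch_nat (Rmax (18 * B * INR A) (Rmax (6 / delta) 6))) as [m Hm].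
  assert (Hm1 : 18 * B * INR A < INR m) by (eapply Rle_lt_trans; [apply Rmax_l|exact Hm]).
  assert (Hm2 : 6 / delta < INR m) by (eapply Rle_lt_trans; [eapply Rle_trans; [apply Rmax_l|apply Rmax_r]|exact Hm]).
  assert (Hm3 : 6 < INR m) by (eapply Rle_lt_trans; [eapply Rle_trans; [apply Rmax_r|apply Rmax_r]|exact Hm]).
  destruct m as [|m']. { simpl in Hm3. lra. }
  set (m := S m') in *.
  set (M := (A ^ m)%nat). set (Nn := (2 ^ M)%nat).
  destruct (Nk_facts A m ltac:(lia)) as [F1 [F2 F3]]. fold M Nn in F1, F2, F3.
  assert (IM : INR m < INR M) by (apply lt_INR; lia).
  assert (IN : INR M < INR Nn) by (apply lt_INR; lia).
  assert (HPI := PI_RGT_0).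
  assert (Hx : 0 <= INR Nn * theta / (2 * PI)).
  { apply Rmult_le_pos. apply Rmult_le_pos. apply pos_INR. lra. left. apply Rinv_0_lt_compat. lra. }
  destruct (nfloor_ex _ Hx) as [q Hq].
  set (th' := INR Nn * theta - 2 * INR q * PI).
  assert (Hth' : 0 <= th' < 2 * PI).
  { unfold th'. destruct Hq as [Hq1 Hq2].
    assert (X1 : INR q * (2 * PI) <= INR Nn * theta).
    { apply (Rmult_le_reg_r (/ (2 * PI))). apply Rinv_0_lt_compat; lra.
      rewrite Rmult_assoc, Rinv_r by lra. lra. }
    assert (X2 : INR Nn * theta < (INR q + 1) * (2 * PI)).
    { apply (Rmult_lt_reg_r (/ (2 * PI))). apply Rinv_0_lt_compat; lra.
      rewrite (Rmult_assoc (INR q + 1)), Rinv_r by lra. lra. }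
    lra. }
  destruct (Hsup th' Hth' (1/4) ltac:(lra)) as [rho [Hrho Hh]].
  assert (HN6 : 6 <= INR Nn) by lra.
  destruct (log_est rho Nn Hrho HN6) as [[Hr0 Hr1] [HrN [Hup Hlow]]].
  set (r := exp (ln rho / INR Nn)) in *.
  exists r.
  assert (HNd : 6 / INR Nn < delta).
  { apply (Rmult_lt_reg_r (INR Nn)). lra. unfold Rdiv. rewrite Rmult_assoc, Rinv_l by lra.
    apply (Rmult_lt_reg_r (/ delta)). apply Rinv_0_lt_compat; lra.
    replace (delta * INR Nn * / delta) with (INR Nn) by (field; lra). unfold Rdiv in Hm2. lra. }
  split. split; lra.
  set (z := polar r theta).
  assert (Hz : Cmod z = r) by (apply Cmod_polar; lra).
  assert (HzD : inD z) by (unfold inD; lra).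
  set (a := fun k => INR (A ^ k) * h (Cpow z (2 ^ (A ^ k)))).
  change (Series a / Rabs (ln (1 - r)) >= 1/4 - eps).
  assert (Hab : forall k, Rabs (a k) <= B * (INR (A ^ k) * r ^ (2 ^ (A ^ k)))).
  { intros k. unfold a. rewrite Rabs_mult, (Rabs_pos_eq (INR _)) by apply pos_INR.
    destruct (Nk_facts A k ltac:(lia)) as [_ [_ G3]].
    assert (Hh2 := Hg _ (inD_pow z (2 ^ (A ^ k)) HzD ltac:(lia))). rewrite Cmod_pow, Hz in Hh2.
    assert (0 <= INR (A ^ k)) by apply pos_INR.
    assert (INR (A ^ k) * Rabs (h (Cpow z (2 ^ (A ^ k)))) <= INR (A ^ k) * (B * r ^ (2 ^ (A ^ k)))) by (apply Rmult_le_compat_l; auto).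
    lra. }
  assert (Hab1 : forall k, Rabs (a k) <= B * INR (A ^ k)).
  { intros k. eapply Rle_trans. apply Hab. apply Rmult_le_compat_l; auto.
    assert (r ^ (2 ^ (A ^ k)) <= 1) by (rewrite <- (pow1 (2 ^ (A ^ k))); apply pow_incr; lra).
    assert (0 <= r ^ (2 ^ (A ^ k))) by (apply pow_le; lra).
    assert (0 <= INR (A ^ k)) by apply pos_INR.
    assert (INR (A ^ k) * r ^ (2 ^ (A ^ k)) <= INR (A ^ k) * 1) by (apply Rmult_le_compat_l; auto). lra. }
  assert (Ham : a m = INR M * h (polar rho th')).
  { unfold a. unfold z. rewrite Cpow_polar. fold M Nn. rewrite HrN.
    replace (INR Nn * theta) with (th' + 2 * INR q * PI) by (unfold th'; ring).
    rewrite polar_period. reflexivity. }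
  assert (Hhead : Rabs (sum_f_R0 a m') <= INR M / 8).
  { eapply Rle_trans. apply sum_f_R0_triangle.
    eapply Rle_trans. apply sum_Rle. intros k _. apply Hab1.
    rewrite (sum_eq _ (fun k => INR (A ^ k) * B)) by (intros; ring). rewrite <- scal_sum.
    assert (HS := head_sum A m' ltac:(lia)). fold m in HS. fold M in HS.
    assert (0 <= sum_f_R0 (fun k => INR (A ^ k)) m') by (apply cond_pos_sum; intros; apply pos_INR).
    assert (B * sum_f_R0 (fun k => INR (A ^ k)) m' <= (INR A - 1) / 8 * sum_f_R0 (fun k => INR (A ^ k)) m') by (apply Rmult_le_compat_r; lra).
    lra. }
  assert (Hexa : ex_series (fun k => Rabs (a k))) by (apply Hex; exact HzD).
  assert (Hext : ex_series (fun j => Rabs (a (S m + j)%nat))).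
  { apply (ex_series_incr_n (fun k => Rabs (a k)) (S m)). exact Hexa. }
  assert (Htail : Rabs (Series (fun j => a (S m + j)%nat)) <= 9/4 * B * INR A).
  { eapply Rle_trans. apply Series_Rabs. exact Hext.
    apply series_le_bound. exact Hext. intros n.
    eapply Rle_trans. apply sum_Rle. intros j _.
    eapply Rle_trans. apply Hab. apply Rmult_le_compat_l. exact HB. apply (tail_term A m j r rho); auto; lra.
    rewrite (sum_eq _ (fun j => (1/3) ^ j * (B * (INR A * (3/2))))) by (intros; ring).
    rewrite <- scal_sum. assert (G := geom_sum3 n).
    assert (0 <= B * (INR A * (3/2))) by (apply Rmult_le_pos; lra).
    assert (B * (INR A * (3/2)) * sum_f_R0 (fun j => (1/3) ^ j) n <= B * (INR A * (3/2)) * (3/2)) by (apply Rmult_le_compat_l; auto).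
    change (sum_f_R0 (pow (1/3)) n) with (sum_f_R0 (fun j => (1/3) ^ j) n). lra. }
  assert (Hexa' : ex_series a) by (apply ex_series_Rabs; exact Hexa).
  rewrite (Series_incr_n a (S m)) by (lia || exact Hexa'). simpl pred.
  replace (sum_f_R0 a m) with (sum_f_R0 a m' + a m) by (unfold m; rewrite tech5; reflexivity).
  rewrite Ham.
  assert (Sbig : INR M / 2 <= sum_f_R0 a m' + INR M * h (polar rho th') + Series (fun j => a (S m + j)%nat)).
  { assert (X1 : INR M * (3/4) <= INR M * h (polar rho th')) by (apply Rmult_le_compat_l; [apply pos_INR| lra]).
    assert (Y1 := Rle_abs (- sum_f_R0 a m')). rewrite Rabs_Ropp in Y1.
    assert (Y2 := Rle_abs (- Series (fun j => a (S m + j)%nat))). rewrite Rabs_Ropp in Y2.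
    assert (Z : 18 * B * INR A <= INR M) by lra.
    lra. }
  assert (L1 : 0 < 1 - r < 1).
  { assert (0 < 1 / (2 * INR Nn)) by (apply Rdiv_lt_0_compat; lra). lra. }
  assert (Lneg : ln (1 - r) < 0) by (rewrite <- ln_1; apply ln_increasing; lra).
  assert (EN : INR Nn = 2 ^ M) by (unfold Nn; rewrite pow_INR; simpl; f_equal; ring).
  assert (Lb : - ln (1 - r) <= 2 * INR M).
  { assert (X := ln_le_mono (1 / (2 * INR Nn)) (1 - r) ltac:(apply Rdiv_lt_0_compat; lra) Hlow).
    unfold Rdiv in X. rewrite Rmult_1_l, ln_Rinv, ln_mult, EN, ln_pow in X by (try apply pow_lt; lra).
    assert (H2 := ln2_lt1). assert (H3 := ln2_pos).
    assert (1 <= INR M) by lra.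
    assert ((INR M + 1) * ln 2 <= INR M + 1) by (apply Rle_trans with ((INR M + 1) * 1); [apply Rmult_le_compat_l; lra | lra]).
    lra. }
  rewrite Rabs_left by lra.
  apply Rle_ge.
  assert (HMp : 0 < INR M) by lra.
  assert (Q : 1/4 <= (sum_f_R0 a m' + INR M * h (polar rho th') + Series (fun j => a (S m + j)%nat)) / - ln (1 - r)).
  { set (S0 := sum_f_R0 a m' + INR M * h (polar rho th') + Series (fun j => a (S m + j)%nat)) in *.
    apply (Rmult_le_reg_r (- ln (1 - r))). lra.
    replace (S0 / - ln (1 - r) * - ln (1 - r)) with S0 by (field; lra). lra. }
  lra.
Qed.

Theorem lemma11 (h : C -> R) (B : R) :
  harmonic_on_D h ->
  0 < B ->
  (forall z, inD z -> Rabs (h z) <= B * Cmod z) ->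
  (* max_{1/6<r<1/3} h(r e^{i theta}) >= 1, read as sup >= 1 *)
  (forall theta, 0 <= theta < 2 * PI ->
     forall eps, 0 < eps ->
       exists r, 1/6 < r < 1/3 /\ h (polar r theta) > 1 - eps) ->
  exists A0 : nat, forall A : nat, (A0 <= A)%nat ->
    let term (z : C) (k : nat) : R :=
      INR (A ^ k) * h (Cpow z (2 ^ (A ^ k))) in
    (forall z, inD z -> ex_series (term z)) /\
    classK (fun z => Series (term z)) /\
    exists d : R, 0 < d /\
      forall theta, 0 <= theta < 2 * PI ->
        forall delta eps, 0 < delta -> 0 < eps ->
          exists r, 1 - delta < r < 1 /\
            Series (term (polar r theta)) / Rabs (ln (1 - r)) >= d - eps.
Proof.
  intros Hh HB Hg Hsup.
  destruct (arch_nat (8 * B + 1)) as [n Hn].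
  exists (max 3 n). intros A HA. cbv zeta.
  assert (HA3 : (3 <= A)%nat) by lia.
  assert (HAB : 8 * B <= INR A - 1).
  { assert (INR n <= INR A) by (apply le_INR; lia). lra. }
  assert (HA2 : (2 <= A)%nat) by lia.
  assert (LB : LocBnd (fun k => G0 h (INR (A ^ k)) (2 ^ (A ^ k)))).
  { apply (LB_of h B (fun k => INR (A ^ k)) (fun k => (2 ^ (A ^ k))%nat)); auto; try lra.
    - intros k. destruct (Nk_facts A k HA2). lia.
    - apply HS_inst; auto.
    - apply HW_inst; auto.
    - intros k z M HM. unfold Gbnds in HM. tauto. }
  assert (Hex : forall z, inD z -> ex_series (fun k => INR (A ^ k) * h (Cpow z (2 ^ (A ^ k))))).
  { intros z Hz. apply (ser_ex _ LB z Hz). }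
  assert (Hexa : forall z, inD z -> ex_series (fun k => Rabs (INR (A ^ k) * h (Cpow z (2 ^ (A ^ k)))))).
  { intros z Hz. destruct (LB z Hz) as [d [K [M [Hd [E [P [D Bd]]]]]]].
    apply (ex_series_ev_abs _ M K); auto. intros k Hk. apply (Bd k z Hk). apply (ball_center z (mkposreal d Hd)). }
  split. exact Hex.
  split.
  - split.
    + apply (series_harmonic h B (fun k => INR (A ^ k)) (fun k => (2 ^ (A ^ k))%nat)); auto; try lra.
      * intros k. destruct (Nk_facts A k HA2). lia.
      * apply HS_inst; auto.
      * apply HW_inst; auto.
    + apply (growth_bound h B A); auto; lra.
  - exists (1/4). split. lra.
    apply (lower_bound h B A); auto; lra.
Qed.
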